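(* Let $0<q<1$ and $\alpha,\gamma,z\in\mathbb{C}$. Then, as an identity of meromorphic functions in $z$, \[ \mathfrak{F}\!\left(\left\{\frac{q^{\frac12(\alpha+\gamma+k)-\frac34}\,(q^{\gamma-\alpha+k};q^2)_\infty\,\sqrt{z}}{(q^{\gamma-\alpha+k+1};q^2)_\infty\,\big(1-(1-z)q^{\gamma+k-1}\big)}\right\}_{k=1}^\infty\right) =\frac{(q^\gamma;q)_\infty}{((1-z)q^\gamma;q)_\infty}\,{}_1\phi_1(q^\alpha;q^\gamma;q,-q^\gamma z). \]
   Context: Complex powers of $q$ are $q^s=e^{s\log q}$. $(a;q)_\infty=\prod_{j\ge0}(1-aq^j)$, $(a;q)_k=\prod_{j=0}^{k-1}(1-aq^j)$, and ${}_1\phi_1(a;b;q,z)=\sum_{k\ge0}(-1)^kq^{k(k-1)/2}\frac{(a;q)_k}{(b;q)_k(q;q)_k}z^k$. For a complex sequence $x=\{x_k\}_{k=1}^{\infty}$ with $\sum_{k\ge1}|x_kx_{k+1}|<\infty$, \[ \mathfrak{F}(x)=1+\sum_{m=1}^\infty(-1)^m\sum_{k_1=1}^\infty\ \sum_{k_2=k_1+2}^\infty\cdots\sum_{k_m=k_{m-1}+2}^\infty x_{k_1}x_{k_1+1}\cdots x_{k_m}x_{k_m+1}. \] Since $\mathfrak{F}$ depends only on products $x_kx_{k+1}$, the branch of $\sqrt z$ is irrelevant. *)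

(* Defs.v *)
From Stdlib Require Import Reals ClassicalEpsilon.
From Coquelicot Require Import Coquelicot.
Open Scope C_scope.

(* Complex power of a positive real base: q^s = e^{s log q}, log q real. *)
Definition qpow (q : R) (s : C) : C :=
  let r := exp (Re s * ln q) in
  (r * cos (Im s * ln q), r * sin (Im s * ln q))%R.

(* Total limit of a complex sequence (the limit if it exists). *)
Definition Clim (u : nat -> C) : C :=
  epsilon (inhabits (RtoC 0)) (fun l => filterlim u eventually (locally l)).

Definition Cseries (a : nat -> C) : C := Clim (fun n => sum_n a n).

Fixpoint Cprod (f : nat -> C) (n : nat) : C :=
  match n with O => 1 | S n' => Cprod f n' * f n' end.

Definition qpoch (a : C) (q : R) (k : nat) : C :=
  Cprod (fun j => 1 - a * RtoC (q ^ j)) k.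
Definition qpoch_inf (a : C) (q : R) : C := Clim (fun n => qpoch a q n).

Definition phi11 (a b : C) (q : R) (z : C) : C :=
  Cseries (fun k => RtoC ((-1) ^ k * q ^ (k * (k - 1) / 2)) * qpoch a q k
                    / (qpoch b q k * qpoch (RtoC q) q k) * pow_n z k).

(* Inner nested sums: G 0 j = 1,
   G (m+1) j = sum_{k >= j} x_k x_{k+1} G m (k+2),
   so G m 1 = sum_{k_1>=1} sum_{k_2>=k_1+2} ... sum_{k_m>=k_{m-1}+2}
              x_{k_1}x_{k_1+1}...x_{k_m}x_{k_m+1}. *)
Fixpoint Gnest (x : nat -> C) (m : nat) (j : nat) : C :=
  match m with
  | O => 1
  | S m' => Cseries (fun i => x (j + i)%nat * x (j + i + 1)%nat * Gnest x m' (j + i + 2)%nat)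
  end.

(* frakF(x) = 1 + sum_{m>=1} (-1)^m G m 1 ; x is indexed from 1 (x 0 unused). *)
Definition frakF (x : nat -> C) : C :=
  1 + Cseries (fun m => RtoC ((-1) ^ (S m)) * Gnest x (S m) 1%nat).

(* Main.v *)
Require Import Defs.
From Stdlib Require Import Reals Lra Lia ClassicalEpsilon.
From Coquelicot Require Import Coquelicot.
Open Scope C_scope.

Definition Ccv (u : nat -> C) (l : C) :=
  forall eps : R, (0 < eps)%R -> exists N, forall n, (N <= n)%nat -> (Cmod (u n - l) < eps)%R.

Lemma Ccv_filterlim u l : Ccv u l -> filterlim u eventually (locally l).
Proof.
  intros H. apply filterlim_locally. intros eps.
  destruct (H eps (cond_pos eps)) as [N HN]. exists N. intros n Hn.
  apply C_NormedModule_mixin_compat1. apply HN. exact Hn.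
Qed.

Lemma filterlim_Ccv u l : filterlim u eventually (locally l) -> Ccv u l.
Proof.
  intros H eps Heps.
  assert (Hs : (0 < eps / sqrt 2)%R).
  { apply Rdiv_lt_0_compat; [lra| apply sqrt_lt_R0; lra]. }
  pose proof (proj1 (filterlim_locally u l) H (mkposreal _ Hs)) as [N HN].
  exists N. intros n Hn. specialize (HN n Hn).
  apply C_NormedModule_mixin_compat2 in HN. simpl in HN.
  replace (sqrt 2 * (eps / sqrt 2))%R with eps in HN. exact HN.
  field. apply Rgt_not_eq, sqrt_lt_R0; lra.
Qed.

Lemma Clim_filterlim u l : filterlim u eventually (locally l) -> Clim u = l.
Proof.
  intros H. unfold Clim.
  pose proof (epsilon_spec (inhabits (RtoC 0)) (fun l => filterlim u eventually (locally l)) (ex_intro _ l H)) as H2.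
  symmetry.
  refine (@filterlim_locally_unique _ C_AbsRing C_NormedModule _ _ u _ _ H H2).
Qed.

Lemma Clim_Ccv u l : Ccv u l -> Clim u = l.
Proof. intros; apply Clim_filterlim, Ccv_filterlim; auto. Qed.

Lemma Ccv_unique u l1 l2 : Ccv u l1 -> Ccv u l2 -> l1 = l2.
Proof. intros H1 H2. rewrite <- (Clim_Ccv _ _ H1). apply Clim_Ccv; auto. Qed.

Lemma Cseries_is a l : is_series (K:=C_AbsRing) (V:=C_NormedModule) a l -> Cseries a = l.
Proof. intros H. apply Clim_filterlim. exact H. Qed.

Lemma Ccv_ext u v l : (forall n, u n = v n) -> Ccv u l -> Ccv v l.
Proof. intros E H eps He. destruct (H eps He) as [N HN]. exists N. intros n Hn. rewrite <- E. auto. Qed.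

Lemma Ccv_const c : Ccv (fun _ => c) c.
Proof. intros eps He. exists O. intros. replace (c - c) with (RtoC 0) by ring. rewrite Cmod_0. lra. Qed.

Lemma Ccv_S u l : Ccv u l -> Ccv (fun n => u (S n)) l.
Proof. intros H eps He. destruct (H eps He) as [N HN]. exists N. intros n Hn. apply HN. lia. Qed.

Lemma Ccv_S_inv u l : Ccv (fun n => u (S n)) l -> Ccv u l.
Proof. intros H eps He. destruct (H eps He) as [N HN]. exists (S N). intros n Hn.
  destruct n as [|n]. lia. apply HN. lia. Qed.

Lemma Ccv_plus u v a b : Ccv u a -> Ccv v b -> Ccv (fun n => u n + v n) (a + b).
Proof.
  intros Hu Hv eps He.
  destruct (Hu (eps/2)%R ltac:(lra)) as [N1 H1]. destruct (Hv (eps/2)%R ltac:(lra)) as [N2 H2].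
  exists (N1 + N2)%nat. intros n Hn.
  replace (u n + v n - (a + b)) with ((u n - a) + (v n - b)) by ring.
  eapply Rle_lt_trans. apply Cmod_triangle.
  specialize (H1 n ltac:(lia)). specialize (H2 n ltac:(lia)). lra.
Qed.

Lemma Ccv_0_iff u l : Ccv u l <-> Ccv (fun n => u n - l) 0.
Proof.
  split; intros H eps He; destruct (H eps He) as [N HN]; exists N; intros n Hn;
  specialize (HN n Hn). replace (u n - l - 0) with (u n - l) by ring. auto.
  replace (u n - l) with (u n - l - 0) by ring. auto.
Qed.

Lemma Ccv_bounded u l : Ccv u l -> exists M, (0 < M)%R /\ forall n, (Cmod (u n) <= M)%R.
Proof.
  intros H. destruct (H 1%R ltac:(lra)) as [N HN].
  assert (Hf : forall K, exists M, (0 < M)%R /\ forall n, (n < K)%nat -> (Cmod (u n) <= M)%R).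
  { induction K. exists 1%R. split. lra. intros; lia.
    destruct IHK as [M [HM HK]]. exists (M + Cmod (u K))%R. split.
    pose proof (Cmod_ge_0 (u K)); lra.
    intros n Hn. destruct (Nat.eq_dec n K). subst. pose proof (Cmod_ge_0 (u K)). lra.
    pose proof (Cmod_ge_0 (u K)). specialize (HK n ltac:(lia)). lra. }
  destruct (Hf N) as [M [HM HK]].
  exists (M + Cmod l + 1)%R. split. pose proof (Cmod_ge_0 l); lra.
  intros n. destruct (Compare_dec.le_lt_dec N n).
  - specialize (HN n l0). replace (u n) with ((u n - l) + l) by ring.
    eapply Rle_trans. apply Cmod_triangle. lra.
  - specialize (HK n l0). pose proof (Cmod_ge_0 l). lra.
Qed.

Lemma Ccv_mult u v a b : Ccv u a -> Ccv v b -> Ccv (fun n => u n * v n) (a * b).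
Proof.
  intros Hu Hv.
  destruct (Ccv_bounded _ _ Hu) as [M [HM HMb]].
  intros eps He.
  set (e1 := (eps / (2 * (Cmod b + 1)))%R).
  set (e2 := (eps / (2 * M))%R).
  assert (Hb : (0 < Cmod b + 1)%R) by (pose proof (Cmod_ge_0 b); lra).
  assert (He1 : (0 < e1)%R) by (unfold e1; apply Rdiv_lt_0_compat; lra).
  assert (He2 : (0 < e2)%R) by (unfold e2; apply Rdiv_lt_0_compat; lra).
  destruct (Hu e1 He1) as [N1 H1]. destruct (Hv e2 He2) as [N2 H2].
  exists (N1 + N2)%nat. intros n Hn.
  replace (u n * v n - a * b) with (u n * (v n - b) + (u n - a) * b) by ring.
  eapply Rle_lt_trans. apply Cmod_triangle. rewrite !Cmod_mult.
  specialize (H1 n ltac:(lia)). specialize (H2 n ltac:(lia)).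
  pose proof (HMb n) as A1. pose proof (Cmod_ge_0 (v n - b)) as A2. pose proof (Cmod_ge_0 (u n - a)) as A3.
  pose proof (Cmod_ge_0 b) as A4. pose proof (Cmod_ge_0 (u n)) as A5.
  assert (A6 : (Cmod (u n) * Cmod (v n - b) < M * e2)%R).
  { apply Rle_lt_trans with (M * Cmod (v n - b))%R. apply Rmult_le_compat_r; lra.
    apply Rmult_lt_compat_l; lra. }
  assert (A7 : (Cmod (u n - a) * Cmod b <= e1 * (Cmod b + 1))%R) by (apply Rmult_le_compat; lra).
  assert (A8 : (M * e2 = eps/2)%R) by (unfold e2; field; lra).
  assert (A9 : (e1 * (Cmod b + 1) = eps/2)%R) by (unfold e1; field; lra).
  lra.
Qed.

Lemma Ccv_le u l c B : Ccv u l -> (forall n, Cmod (u n - c) <= B)%R -> (Cmod (l - c) <= B)%R.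
Proof.
  intros H Hb. apply Rnot_lt_le. intros Hlt.
  destruct (H (Cmod (l - c) - B)%R ltac:(lra)) as [N HN].
  specialize (HN N (le_n _)). specialize (Hb N).
  pose proof (Cmod_triangle (u N - c) (l - u N)).
  replace (u N - c + (l - u N)) with (l - c) in H0 by ring.
  replace (l - u N) with (- (u N - l)) in H0 by ring. rewrite Cmod_opp in H0. lra.
Qed.

Lemma Ccv_inv u l : Ccv u l -> l <> 0 -> Ccv (fun n => / u n) (/ l).
Proof.
  intros H Hl0. pose proof Hl0 as Hl. apply Cmod_gt_0 in Hl.
  intros eps He.
  set (m := Cmod l).
  assert (Hm : (0 < m)%R) by (unfold m; exact Hl).
  destruct (H (m/2)%R ltac:(unfold m; lra)) as [N1 H1].
  set (e := (eps * m * m / 2)%R).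
  assert (0 < e)%R.
  { unfold e. assert (0 < eps * m)%R by (apply Rmult_lt_0_compat; lra).
    assert (0 < eps * m * m)%R by (apply Rmult_lt_0_compat; lra). lra. }
  destruct (H e H0) as [N2 H2]. exists (N1 + N2)%nat. intros n Hn.
  specialize (H1 n ltac:(lia)). specialize (H2 n ltac:(lia)).
  assert (Hun : (m / 2 <= Cmod (u n))%R).
  { pose proof (Cmod_triangle (u n) (l - u n)). replace (u n + (l - u n)) with l in H3 by ring.
    replace (l - u n) with (- (u n - l)) in H3 by ring. rewrite Cmod_opp in H3. fold m in H3. lra. }
  assert (Hu0 : u n <> 0). { intros E. rewrite E, Cmod_0 in Hun. lra. }
  replace (/ u n - / l) with ((l - u n) / (u n * l)) by (field; auto).
  rewrite Cmod_div by (apply Cmult_neq_0; auto). rewrite Cmod_mult.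
  replace (l - u n) with (- (u n - l)) by ring. rewrite Cmod_opp. fold m.
  apply (Rmult_lt_reg_r (Cmod (u n) * m)). apply Rmult_lt_0_compat; lra.
  unfold Rdiv. rewrite Rmult_assoc, Rinv_l, Rmult_1_r by (apply Rgt_not_eq, Rmult_lt_0_compat; lra).
  unfold e in H2.
  assert (0 <= eps * m)%R by (apply Rmult_le_pos; lra).
  assert (eps * m * (m/2) <= eps * m * Cmod (u n))%R by (apply Rmult_le_compat_l; lra).
  lra.
Qed.

Lemma cv_of_diff (u : nat -> C) (b : nat -> R) :
  (forall n, Cmod (u (S n) - u n) <= b n)%R -> ex_series b -> exists l, Ccv u l.
Proof.
  intros Hd Hb.
  assert (He : ex_series (K:=C_AbsRing) (V:=C_CompleteNormedModule) (fun n => u (S n) - u n)).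
  { apply (ex_series_le _ b); auto. }
  destruct He as [L HL].
  assert (Hs : forall n, sum_n (fun n => u (S n) - u n) n = u (S n) - u O).
  { induction n. rewrite sum_O. reflexivity. rewrite sum_Sn, IHn. simpl. change plus with Cplus. ring. }
  exists (L + u O). apply Ccv_S_inv.
  apply filterlim_Ccv in HL.
  apply (Ccv_ext (fun n => sum_n (fun n => u (S n) - u n) n + u O)).
  { intros n. rewrite Hs. ring. }
  apply Ccv_plus; auto. apply Ccv_const.
Qed.

Lemma Cinv_0 : / (RtoC 0) = 0.
Proof. unfold Cinv. simpl. unfold Rdiv. rewrite !Rmult_0_l. apply injective_projections; simpl; ring. Qed.

Lemma Cinv_mult_gen (x y : C) : / (x * y) = / x * / y.
Proof.
  destruct (Ceq_dec x 0) as [->|Hx].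
  - replace (0 * y) with (RtoC 0) by ring. rewrite Cinv_0. ring.
  - destruct (Ceq_dec y 0) as [->|Hy].
    + replace (x * 0) with (RtoC 0) by ring. rewrite Cinv_0. ring.
    + field. auto.
Qed.


Lemma qpow_add q s t : qpow q (s + t) = qpow q s * qpow q t.
Proof.
  unfold qpow. destruct s as [s1 s2], t as [t1 t2]. simpl.
  apply injective_projections; simpl;
  rewrite !Rmult_plus_distr_r, exp_plus, ?cos_plus, ?sin_plus; ring.
Qed.

Lemma qpow_nat q n : (0 < q)%R -> qpow q (RtoC (INR n)) = RtoC (q ^ n).
Proof.
  intros Hq. unfold qpow. simpl. rewrite !Rmult_0_l, cos_0, sin_0.
  rewrite <- Rpower_pow by auto. unfold Rpower.
  apply injective_projections; simpl; ring.
Qed.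

Lemma qpow_neq0 q s : qpow q s <> 0.
Proof.
  intros H. unfold qpow in H. injection H as H1 H2.
  pose proof (exp_pos (Re s * ln q)) as E.
  assert (A1 : cos (Im s * ln q) = 0%R) by (apply Rmult_eq_reg_l with (exp (Re s * ln q)); lra).
  assert (A2 : sin (Im s * ln q) = 0%R) by (apply Rmult_eq_reg_l with (exp (Re s * ln q)); lra).
  pose proof (sin2_cos2 (Im s * ln q)) as A3. rewrite A1, A2 in A3. unfold Rsqr in A3. lra.
Qed.

Lemma qpoch_S a q n : qpoch a q (S n) = qpoch a q n * (1 - a * RtoC (q ^ n)).
Proof. reflexivity. Qed.

Lemma qpoch_shift a q n : qpoch a q (S n) = (1 - a) * qpoch (a * RtoC q) q n.
Proof.
  induction n.
  - unfold qpoch. simpl. ring.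
  - rewrite qpoch_S, IHn, qpoch_S. replace (RtoC (q ^ S n)) with (RtoC q * RtoC (q ^ n)).
    ring. rewrite <- RtoC_mult. reflexivity.
Qed.

Lemma prod_bound (u : nat -> C) (M q : R) n :
  (0 <= q < 1)%R -> (forall j, Cmod (u j) <= M * q ^ j)%R ->
  (Cmod (Cprod (fun j => (1 - u j)%C) n - 1)%C <= exp (M * (1 - q ^ n) / (1 - q)) - 1)%R.
Proof.
  intros Hq Hu. induction n.
  - simpl. replace (1 - 1) with (RtoC 0) by ring. rewrite Cmod_0.
    replace (M * (1 - 1) / (1 - q))%R with 0%R by (field; lra). rewrite exp_0. lra.
  - simpl Cprod.
    set (P := Cprod (fun j => 1 - u j) n) in *.
    replace (P * (1 - u n) - 1) with ((P - 1) * (1 - u n) - u n) by ring.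
    eapply Rle_trans. unfold Cminus at 1. eapply Rle_trans. apply Cmod_triangle.
    rewrite Cmod_opp, Cmod_mult. apply Rle_refl.
    assert (H1 : (Cmod (1 - u n) <= 1 + Cmod (u n))%R).
    { unfold Cminus. eapply Rle_trans. apply Cmod_triangle. rewrite Cmod_opp, Cmod_1. lra. }
    pose proof (Cmod_ge_0 (P - 1)). pose proof (Cmod_ge_0 (u n)).
    set (E := exp (M * (1 - q ^ n) / (1 - q))) in *.
    assert (Cmod (P - 1) * Cmod (1 - u n) <= (E - 1) * (1 + Cmod (u n)))%R.
    { apply Rmult_le_compat; auto. apply Cmod_ge_0. }
    assert (Hx : (1 + Cmod (u n) <= exp (M * q ^ n))%R).
    { pose proof (Hu n) as B1. pose proof (Cmod_ge_0 (u n)) as B2.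
      assert (B3 : (0 <= M * q^n)%R) by lra.
      destruct (Rle_lt_or_eq_dec _ _ B3) as [B4|B4].
      pose proof (exp_ineq1 (M * q ^ n) ltac:(lra)). lra.
      rewrite <- B4 in *. rewrite exp_0. lra. }
    assert (Hexp : (exp (M * (1 - q ^ S n) / (1 - q)) = E * exp (M * q ^ n))%R).
    { unfold E. rewrite <- exp_plus. f_equal. simpl. field. lra. }
    rewrite Hexp.
    assert (0 < E)%R by apply exp_pos.
    assert (E * (1 + Cmod (u n)) <= E * exp (M * q ^ n))%R by (apply Rmult_le_compat_l; lra).
    nra.
Qed.

Lemma prod_bound' (u : nat -> C) (M q : R) n :
  (0 <= q < 1)%R -> (0 <= M)%R -> (forall j, Cmod (u j) <= M * q ^ j)%R ->
  (Cmod (Cprod (fun j => (1 - u j)%C) n - 1)%C <= exp (M / (1 - q)) - 1)%R.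
Proof.
  intros Hq HM Hu. eapply Rle_trans. apply prod_bound; eauto.
  assert (M * (1 - q ^ n) / (1 - q) <= M / (1 - q))%R.
  { unfold Rdiv. apply Rmult_le_compat_r. apply Rlt_le, Rinv_0_lt_compat. lra.
    assert (0 <= q^n)%R by (apply pow_le; lra). nra. }
  destruct (Rle_lt_or_eq_dec _ _ H). pose proof (exp_increasing _ _ r). lra. rewrite e. lra.
Qed.

Lemma Cmod_le_1 (x : C) B : (Cmod (x - 1)%C <= B)%R -> (Cmod x <= 1 + B)%R.
Proof. intros H. replace x with ((x - 1) + 1) by ring. eapply Rle_trans. apply Cmod_triangle. rewrite Cmod_1. lra. Qed.

Lemma qpoch_bound a q n : (0 <= q < 1)%R ->
  (Cmod (qpoch a q n - 1)%C <= exp (Cmod a / (1 - q)) - 1)%R.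
Proof.
  intros Hq. unfold qpoch. apply prod_bound'; auto. apply Cmod_ge_0.
  intros j. rewrite Cmod_mult, Cmod_R, Rabs_pos_eq. lra. apply pow_le; lra.
Qed.

Lemma qpoch_cv a q : (0 <= q < 1)%R -> Ccv (qpoch a q) (qpoch_inf a q).
Proof.
  intros Hq.
  assert (Hex : exists l, Ccv (qpoch a q) l).
  { apply (cv_of_diff _ (fun n => exp (Cmod a / (1 - q)) * Cmod a * q ^ n)%R).
    - intros n. rewrite qpoch_S. replace (qpoch a q n * (1 - a * RtoC (q ^ n)) - qpoch a q n)
        with (- (qpoch a q n * a * RtoC (q ^ n))) by ring.
      rewrite Cmod_opp, !Cmod_mult, Cmod_R, Rabs_pos_eq by (apply pow_le; lra).
      pose proof (Cmod_le_1 _ _ (qpoch_bound a q n Hq)).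
      apply Rmult_le_compat_r. apply pow_le; lra. apply Rmult_le_compat_r. apply Cmod_ge_0. lra.
    - exists (exp (Cmod a / (1 - q)) * Cmod a * / (1 - q))%R.
      apply (is_series_ext (fun n => scal (exp (Cmod a / (1 - q)) * Cmod a)%R (q ^ n)%R)).
      intros; reflexivity. apply (is_series_scal (K:=R_AbsRing) (V:=R_NormedModule)).
      apply is_series_geom. rewrite Rabs_pos_eq; lra. }
  destruct Hex as [l Hl]. unfold qpoch_inf. replace (Clim (fun n => qpoch a q n)) with l. auto. symmetry. apply Clim_Ccv. auto.
Qed.

Lemma qpoch_inf_shift a q : (0 <= q < 1)%R -> qpoch_inf a q = (1 - a) * qpoch_inf (a * RtoC q) q.
Proof.
  intros Hq. apply (Ccv_unique (fun n => qpoch a q (S n))).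
  apply Ccv_S, qpoch_cv; auto.
  apply (Ccv_ext (fun n => (1 - a) * qpoch (a * RtoC q) q n)).
  intros; rewrite qpoch_shift; auto.
  apply Ccv_mult. apply Ccv_const. apply qpoch_cv; auto.
Qed.

Lemma qpoch_inf_bound a q : (0 <= q < 1)%R ->
  (Cmod (qpoch_inf a q - 1)%C <= exp (Cmod a / (1 - q)) - 1)%R.
Proof. intros Hq. apply (Ccv_le (qpoch a q)). apply qpoch_cv; auto. intros; apply qpoch_bound; auto. Qed.


Lemma pow_le1 (x : R) n : (0 <= x <= 1)%R -> (x ^ n <= 1)%R.
Proof. intros H. induction n. simpl; lra. simpl. assert (0 <= x ^ n)%R by (apply pow_le; lra). nra. Qed.

Lemma Cmod_1_minus (w : C) : (1 - Cmod w <= Cmod (1 - w))%R.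
Proof.
  pose proof (Cmod_triangle (1 - w) w). replace (1 - w + w) with (RtoC 1) in H by ring.
  rewrite Cmod_1 in H. lra.
Qed.

Lemma Cmod_diff_ge (x y : C) : (Cmod x - Cmod y <= Cmod (x - y))%R.
Proof.
  pose proof (Cmod_triangle (x - y) y). replace (x - y + y) with x in H by ring. lra.
Qed.

Lemma geom_dom (a : nat -> C) C0 r : (0 <= r < 1)%R -> (forall n, Cmod (a n) <= C0 * r ^ n)%R ->
  exists l, is_series (K:=C_AbsRing) (V:=C_NormedModule) a l.
Proof.
  intros Hr Ha.
  assert (ex_series (K:=C_AbsRing) (V:=C_CompleteNormedModule) a).
  { apply (ex_series_le _ (fun n => C0 * r ^ n)%R); auto.
    exists (C0 * / (1 - r))%R.
    apply (is_series_ext (fun n => scal C0 (r ^ n)%R)). intros; reflexivity.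
    apply (is_series_scal (K:=R_AbsRing) (V:=R_NormedModule)).
    apply is_series_geom. rewrite Rabs_pos_eq; lra. }
  destruct H as [l Hl]. exists l. exact Hl.
Qed.

Lemma geom_partial (a : nat -> C) C0 r N : (0 <= r < 1)%R -> (forall n, Cmod (a n) <= C0 * r ^ n)%R ->
  (Cmod (sum_n a N) <= C0 * (1 - r ^ (S N)) / (1 - r))%R.
Proof.
  intros Hr Ha. induction N.
  - rewrite sum_O. eapply Rle_trans. apply Ha. simpl. right. field. lra.
  - rewrite sum_Sn. eapply Rle_trans. apply Cmod_triangle. eapply Rle_trans.
    apply Rplus_le_compat. apply IHN. apply Ha. right. simpl. field. lra.
Qed.

Lemma geom_dom_bound (a : nat -> C) C0 r l : (0 <= r < 1)%R -> (forall n, Cmod (a n) <= C0 * r ^ n)%R ->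
  is_series (K:=C_AbsRing) (V:=C_NormedModule) a l -> (Cmod l <= C0 / (1 - r))%R.
Proof.
  intros Hr Ha Hl.
  assert (HC0 : (0 <= C0)%R). { pose proof (Ha O). pose proof (Cmod_ge_0 (a O)). simpl in H. lra. }
  replace l with (l - 0) by ring.
  apply (Ccv_le (sum_n a)). apply filterlim_Ccv. exact Hl.
  intros n. assert (E0 : forall x : C, x - 0 = x) by (intros; ring). rewrite E0.
  eapply Rle_trans. apply geom_partial; eauto.
  unfold Rdiv. apply Rmult_le_compat_r. apply Rlt_le, Rinv_0_lt_compat. lra.
  assert (0 <= r ^ S n)%R by (apply pow_le; lra). nra.
Qed.

Lemma plus_opp_C (x y : C) : plus (x + y) (opp y) = x.
Proof. change (@eq C (Cplus (Cplus x y) (Copp y)) x). ring. Qed.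
Lemma plus_minus_C (x y : C) : plus (x - y) y = x.
Proof. change (@eq C (Cplus (x - y) y) x). ring. Qed.

Lemma ratio_ex (t : nat -> C) K r : (0 <= r < 1)%R ->
  (forall k, (K <= k)%nat -> Cmod (t (S k)) <= r * Cmod (t k))%R ->
  exists l, is_series (K:=C_AbsRing) (V:=C_NormedModule) t l.
Proof.
  intros Hr Ht.
  assert (Hb : forall k, (Cmod (t (K + k)%nat) <= Cmod (t K) * r ^ k)%R).
  { induction k. rewrite Nat.add_0_r. simpl. lra.
    replace (K + S k)%nat with (S (K + k)) by lia. eapply Rle_trans. apply Ht. lia.
    simpl. assert (0 <= r)%R by lra. nra. }
  destruct (geom_dom (fun k => t (K + k)%nat) (Cmod (t K)) r Hr Hb) as [L HL].
  destruct K as [|K].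
  - exists L. apply (is_series_ext (fun k => t (0 + k)%nat)). intros; reflexivity. exact HL.
  - exists (L + sum_n t K). apply (is_series_decr_n t (S K)). lia.
    change (Init.Nat.pred (S K)) with K.
    match goal with |- is_series _ ?X => replace X with L end. exact HL.
    exact (eq_sym (plus_opp_C _ _)).
Qed.

Lemma ratio_bound0 (t : nat -> C) r l : (0 <= r < 1)%R ->
  (forall k, Cmod (t (S k)) <= r * Cmod (t k))%R ->
  is_series (K:=C_AbsRing) (V:=C_NormedModule) t l ->
  (Cmod (l - t O) <= Cmod (t O) * r / (1 - r))%R.
Proof.
  intros Hr Ht Hl.
  assert (H1 : is_series (K:=C_AbsRing) (V:=C_NormedModule) (fun k => t (S k)) (l - t O)).
  { apply is_series_incr_1. match goal with |- is_series _ ?X => replace X with l end. exact Hl.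
    exact (eq_sym (plus_minus_C _ _)). }
  apply (geom_dom_bound (fun k => t (S k)) (Cmod (t O) * r)%R r); auto.
  intros n. induction n. simpl. rewrite Rmult_1_r. rewrite Rmult_comm. apply Ht.
  eapply Rle_trans. apply Ht. simpl. assert (0 <= r)%R by lra.
  replace (Cmod (t O) * r * (r * r ^ n))%R with (r * (Cmod (t O) * r * r ^ n))%R by ring.
  apply Rmult_le_compat_l; auto.
Qed.

Definition pterm (a b : C) (q : R) (Z : C) (k : nat) : C :=
  RtoC ((-1) ^ k * q ^ (k * (k - 1) / 2)) * qpoch a q k
    / (qpoch b q k * qpoch (RtoC q) q k) * pow_n Z k.

Lemma phi11_pterm a b q Z : phi11 a b q Z = Cseries (pterm a b q Z).
Proof. reflexivity. Qed.

Lemma tri_nat k : (S k * (S k - 1) / 2 = k * (k - 1) / 2 + k)%nat.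
Proof.
  replace (S k * (S k - 1))%nat with (k * (k - 1) + k * 2)%nat.
  apply Nat.div_add. lia.
  destruct k. reflexivity. simpl. nia.
Qed.

Definition pratio (a b : C) (q : R) (Z : C) (k : nat) : C :=
  RtoC (- q ^ k) * (1 - a * RtoC (q ^ k)) * / ((1 - b * RtoC (q ^ k)) * (1 - RtoC q * RtoC (q ^ k))) * Z.

Lemma pterm_S a b q Z k : pterm a b q Z (S k) = pterm a b q Z k * pratio a b q Z k.
Proof.
  unfold pterm, pratio. rewrite tri_nat, !qpoch_S, pow_add.
  change (pow_n Z (S k)) with (Z * pow_n Z k).
  unfold Cdiv. rewrite !Cinv_mult_gen.
  replace ((-1) ^ S k)%R with (- (-1) ^ k)%R by (simpl; ring).
  rewrite !RtoC_mult, !RtoC_opp.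
  ring.
Qed.

Lemma pratio_bound a b q Z k : (0 < q < 1)%R -> (Cmod b * q ^ k <= 1/2)%R ->
  (Cmod (pratio a b q Z k) <= q ^ k * ((1 + Cmod a) * 4 / (1 - q) * Cmod Z))%R.
Proof.
  intros Hq Hb. unfold pratio.
  assert (Hqk : (0 < q ^ k)%R) by (apply pow_lt; lra).
  assert (Hqk1 : (q ^ k <= 1)%R) by (apply pow_le1; lra).
  assert (D1 : (1/2 <= Cmod (1 - b * RtoC (q ^ k)))%R).
  { eapply Rle_trans. 2: apply Cmod_1_minus. rewrite Cmod_mult, Cmod_R, Rabs_pos_eq; lra. }
  assert (D2 : (1 - q <= Cmod (1 - RtoC q * RtoC (q ^ k)))%R).
  { eapply Rle_trans. 2: apply Cmod_1_minus. rewrite Cmod_mult, !Cmod_R, !Rabs_pos_eq; try lra.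
    assert (q * q ^ k <= q * 1)%R by (apply Rmult_le_compat_l; lra). lra. }
  assert (N1 : (Cmod (1 - a * RtoC (q ^ k)) <= 1 + Cmod a)%R).
  { unfold Cminus. eapply Rle_trans. apply Cmod_triangle. rewrite Cmod_opp, Cmod_1, Cmod_mult, Cmod_R, Rabs_pos_eq by lra.
    assert (Cmod a * q ^ k <= Cmod a)%R by (pose proof (Cmod_ge_0 a); nra). lra. }
  assert (Hd : (1 - b * RtoC (q ^ k)) * (1 - RtoC q * RtoC (q ^ k)) <> 0).
  { apply Cmult_neq_0; intros E; [rewrite E, Cmod_0 in D1 | rewrite E, Cmod_0 in D2]; lra. }
  rewrite !Cmod_mult, Cmod_inv by auto. rewrite Cmod_mult, Cmod_R, Rabs_Ropp, Rabs_pos_eq by lra.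
  set (m1 := Cmod (1 - b * RtoC (q ^ k))) in *. set (m2 := Cmod (1 - RtoC q * RtoC (q ^ k))) in *.
  assert (I1 : (/ (m1 * m2) <= 2 / (1 - q))%R).
  { replace (2 / (1 - q))%R with (/ ((1/2) * (1 - q)))%R by (field; lra).
    apply Rinv_le_contravar. apply Rmult_lt_0_compat; lra. apply Rmult_le_compat; lra. }
  pose proof (Cmod_ge_0 Z). pose proof (Cmod_ge_0 (1 - a * RtoC (q ^ k))). pose proof (Cmod_ge_0 a).
  assert (0 <= / (m1 * m2))%R by (apply Rlt_le, Rinv_0_lt_compat, Rmult_lt_0_compat; lra).
  assert (E1 : (q ^ k * Cmod (1 - a * RtoC (q ^ k)) <= q ^ k * (1 + Cmod a))%R) by (apply Rmult_le_compat_l; lra).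
  assert (E2 : (q ^ k * Cmod (1 - a * RtoC (q ^ k)) * / (m1 * m2) <= q ^ k * (1 + Cmod a) * (2 / (1 - q)))%R).
  { apply Rmult_le_compat; try lra. apply Rmult_le_pos; lra. }
  assert (E3 : (q ^ k * (1 + Cmod a) * (2 / (1 - q)) <= q ^ k * ((1 + Cmod a) * 4 / (1 - q)))%R).
  { assert (0 < 1 - q)%R by lra. unfold Rdiv.
    assert (0 < / (1 - q))%R by (apply Rinv_0_lt_compat; lra).
    assert (0 <= q ^ k * (1 + Cmod a) * / (1 - q))%R by (apply Rmult_le_pos; [apply Rmult_le_pos|]; lra).
    replace (q ^ k * (1 + Cmod a) * (2 * / (1 - q)))%R with (2 * (q ^ k * (1 + Cmod a) * / (1 - q)))%R by ring.
    replace (q ^ k * ((1 + Cmod a) * 4 * / (1 - q)))%R with (4 * (q ^ k * (1 + Cmod a) * / (1 - q)))%R by ring.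
    lra. }
  eapply Rle_trans. apply Rmult_le_compat_r. auto. apply E2.
  rewrite Rmult_assoc. replace (q ^ k * ((1 + Cmod a) * 4 / (1 - q) * Cmod Z))%R with
    (q ^ k * ((1 + Cmod a) * 4 / (1 - q)) * Cmod Z)%R by ring.
  rewrite <- Rmult_assoc. apply Rmult_le_compat_r; lra.
Qed.

Lemma pterm_0 a b q Z : pterm a b q Z O = 1.
Proof. unfold pterm, qpoch. simpl. change (@one C_Ring) with (RtoC 1). rewrite Rmult_1_l. field. Qed.

Lemma pow_small q eps : (0 < q < 1)%R -> (0 < eps)%R -> exists N, forall n, (N <= n)%nat -> (q ^ n < eps)%R.
Proof.
  intros Hq He. destruct (pow_lt_1_zero q ltac:(rewrite Rabs_pos_eq; lra) eps He) as [N HN].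
  exists N. intros n Hn. specialize (HN n Hn). rewrite Rabs_pos_eq in HN. auto. apply pow_le; lra.
Qed.

Lemma phi_ex a b q Z : (0 < q < 1)%R -> exists l, is_series (K:=C_AbsRing) (V:=C_NormedModule) (pterm a b q Z) l.
Proof.
  intros Hq.
  set (A := ((1 + Cmod a) * 4 / (1 - q) * Cmod Z)%R).
  assert (HA : (0 <= A)%R).
  { unfold A. pose proof (Cmod_ge_0 a). pose proof (Cmod_ge_0 Z).
    apply Rmult_le_pos; auto. unfold Rdiv. apply Rmult_le_pos. lra. apply Rlt_le, Rinv_0_lt_compat; lra. }
  destruct (pow_small q (/ (2 * (Cmod b + A + 1)))%R Hq) as [K HK].
  { apply Rinv_0_lt_compat. pose proof (Cmod_ge_0 b). lra. }
  apply (ratio_ex _ K (1/2)%R). lra.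
  intros k Hk. rewrite pterm_S, Cmod_mult, Rmult_comm. apply Rmult_le_compat_r. apply Cmod_ge_0.
  specialize (HK k Hk). pose proof (Cmod_ge_0 b).
  assert (Hqk : (0 < q ^ k)%R) by (apply pow_lt; lra).
  assert (Hm : (q ^ k * (Cmod b + A + 1) <= 1/2)%R).
  { apply Rmult_lt_compat_r with (r := (Cmod b + A + 1)%R) in HK. rewrite Rinv_mult, Rmult_assoc, Rinv_l, Rmult_1_r in HK by lra. lra. lra. }
  eapply Rle_trans. apply pratio_bound; auto. nra. fold A. nra.
Qed.

Lemma phi_small a b q Z : (0 < q < 1)%R -> (Cmod b <= 1/2)%R ->
  ((1 + Cmod a) * 4 / (1 - q) * Cmod Z <= 1/2)%R ->
  (Cmod (Cseries (pterm a b q Z) - 1) <= 2 * ((1 + Cmod a) * 4 / (1 - q) * Cmod Z))%R.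
Proof.
  intros Hq Hb HZ.
  set (A := ((1 + Cmod a) * 4 / (1 - q) * Cmod Z)%R) in *.
  assert (HA : (0 <= A)%R).
  { unfold A. pose proof (Cmod_ge_0 a). pose proof (Cmod_ge_0 Z).
    apply Rmult_le_pos; auto. unfold Rdiv. apply Rmult_le_pos. lra. apply Rlt_le, Rinv_0_lt_compat; lra. }
  destruct (phi_ex a b q Z Hq) as [l Hl]. rewrite (Cseries_is _ _ Hl).
  replace (l - 1) with (l - pterm a b q Z O) by (rewrite pterm_0; auto).
  eapply Rle_trans. apply (ratio_bound0 _ A); auto. lra.
  intros k. rewrite pterm_S, Cmod_mult, Rmult_comm. apply Rmult_le_compat_r. apply Cmod_ge_0.
  assert (Hqk : (0 < q ^ k <= 1)%R) by (split; [apply pow_lt| apply pow_le1]; lra).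
  eapply Rle_trans. apply pratio_bound; auto. pose proof (Cmod_ge_0 b). nra.
  fold A. nra.
  rewrite pterm_0, Cmod_1. apply Rmult_le_reg_r with (1 - A)%R. lra.
  unfold Rdiv. rewrite Rmult_assoc, Rinv_l by lra. nra.
Qed.


Lemma Cprod_neq0 (f : nat -> C) n : (forall j, f j <> 0) -> Cprod f n <> 0.
Proof.
  intros H. induction n.
  - simpl. intros E. apply (f_equal fst) in E. simpl in E. lra.
  - change (Cprod f (S n)) with (Cprod f n * f n). apply Cmult_neq_0. exact IHn. apply H.
Qed.

Lemma pow_n_mult (w y : C) k : @eq C (pow_n (w * y) k) (pow_n w k * pow_n y k).
Proof. induction k. simpl. change (@one C_Ring) with (RtoC 1). ring.
  change (pow_n (w * y) (S k)) with ((w*y) * pow_n (w*y) k). rewrite IHk.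
  change (pow_n w (S k)) with (w * pow_n w k). change (pow_n y (S k)) with (y * pow_n y k). ring. Qed.

Lemma pow_n_R (q : R) k : @eq C (pow_n (RtoC q) k) (RtoC (q ^ k)).
Proof. induction k. reflexivity. change (pow_n (RtoC q) (S k)) with (RtoC q * pow_n (RtoC q) k).
  rewrite IHk. simpl. rewrite RtoC_mult. reflexivity. Qed.

Definition Tt (a b : C) (q : R) (z : C) (k : nat) : C := pterm a b q (- b * z) k.

Lemma qq_neq0 q j : (0 < q < 1)%R -> 1 - RtoC q * RtoC (q ^ j) <> 0.
Proof.
  intros Hq E. assert (H : (q * q ^ j < 1)%R).
  { assert (q ^ j <= 1)%R by (apply pow_le1; lra). assert (0 <= q^j)%R by (apply pow_le; lra). nra. }
  rewrite <- RtoC_mult in E. apply (f_equal fst) in E. simpl in E. lra.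
Qed.

Lemma contig_term a b q z m : (0 < q < 1)%R -> (forall j, 1 - b * RtoC (q ^ j) <> 0) ->
  (1 - b) * (1 - b * RtoC q) * Tt a b q z (S m)
  = (1 - b * RtoC q) * (1 - b) * Tt a (b * RtoC q) q z (S m)
    + (1 - b * RtoC q) * b * z * Tt a (b * RtoC q) q z m
    - z * (a * b - RtoC q * b * b) * Tt a (b * RtoC q * RtoC q) q z m.
Proof.
  intros Hq Hb.
  assert (Hbq : forall j, 1 - b * RtoC q * RtoC (q ^ j) <> 0).
  { intros j. replace (b * RtoC q * RtoC (q ^ j)) with (b * RtoC (q ^ S j)). apply Hb.
    simpl. rewrite RtoC_mult. ring. }
  set (Y := qpoch (b * RtoC q) q m).
  assert (HY : Y <> 0) by (apply Cprod_neq0; auto).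
  set (X := RtoC (q ^ m)).
  assert (EP : qpoch (b * RtoC q * RtoC q) q m = Y * (1 - b * RtoC q * X) / (1 - b * RtoC q)).
  { pose proof (qpoch_shift (b * RtoC q) q m) as E1. rewrite qpoch_S in E1. fold Y X in E1.
    assert (1 - b * RtoC q <> 0) by (pose proof (Hb 1%nat); simpl in H; rewrite Rmult_1_r in H; auto).
    rewrite E1. field. auto. }
  assert (HK : qpoch (RtoC q) q m <> 0) by (apply Cprod_neq0; intros; apply qq_neq0; auto).
  unfold Tt, pterm.
  rewrite (qpoch_shift b q m). fold Y.
  rewrite !qpoch_S. fold Y X. rewrite EP.
  rewrite tri_nat, pow_add.
  change (pow_n (- b * z) (S m)) with ((- b * z) * pow_n (- b * z) m).
  change (pow_n (- (b * RtoC q) * z) (S m)) with ((- (b * RtoC q) * z) * pow_n (- (b * RtoC q) * z) m).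
  replace (- (b * RtoC q) * z) with ((- b * z) * RtoC q) by ring.
  replace (- (b * RtoC q * RtoC q) * z) with ((- b * z) * RtoC q * RtoC q) by ring.
  rewrite !pow_n_mult, !pow_n_R. fold X.
  replace ((-1) ^ S m)%R with (- (-1) ^ m)%R by (simpl; ring).
  rewrite !RtoC_mult, !RtoC_opp. fold X.
  set (W := pow_n (- b * z) m). set (A := qpoch a q m). set (Kq := qpoch (RtoC q) q m).
  set (s1 := RtoC ((-1) ^ m)). set (s2 := RtoC (q ^ (m * (m - 1) / 2))).
  assert (H1 : 1 - b * RtoC q <> 0) by (pose proof (Hb 1%nat); simpl in H; rewrite Rmult_1_r in H; auto).
  assert (H0 : 1 - b <> 0) by (pose proof (Hb 0%nat); simpl in H; rewrite Cmult_1_r in H; auto).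
  assert (H2 : 1 - b * RtoC q * X <> 0) by (apply Hbq).
  assert (H3 : 1 - RtoC q * X <> 0) by (apply qq_neq0; auto).
  field. repeat split; auto.
Qed.

Notation Cis_series := (is_series (K:=C_AbsRing) (V:=C_NormedModule)).

Lemma Cis_scal c (a : nat -> C) l : Cis_series a l -> Cis_series (fun n => c * a n) (c * l).
Proof. intros H. apply (is_series_scal c) in H. exact H. Qed.

Lemma Cis_plus (a b : nat -> C) la lb : Cis_series a la -> Cis_series b lb -> Cis_series (fun n => a n + b n) (la + lb).
Proof. intros H1 H2. exact (is_series_plus _ _ _ _ H1 H2). Qed.

Lemma Cis_minus (a b : nat -> C) la lb : Cis_series a la -> Cis_series b lb -> Cis_series (fun n => a n - b n) (la - lb).
Proof. intros H1 H2. exact (is_series_minus _ _ _ _ H1 H2). Qed.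

Lemma Cis_ext (a b : nat -> C) l : (forall n, a n = b n) -> Cis_series a l -> Cis_series b l.
Proof. intros E H. exact (is_series_ext _ _ _ E H). Qed.

Lemma Cis_unique (a : nat -> C) l1 l2 : Cis_series a l1 -> Cis_series a l2 -> l1 = l2.
Proof. intros H1 H2. rewrite <- (Cseries_is _ _ H1). apply Cseries_is; auto. Qed.

Lemma Cis_shiftback (w : nat -> C) (l : C) : Cis_series w l ->
  Cis_series (fun n : nat => match n with O => RtoC 0 | S m => w m end) l.
Proof.
  intros H. apply is_series_decr_1. simpl.
  match goal with |- is_series _ ?X => replace X with l end. exact H.
  change (@eq C l (Cplus l (Copp 0))). ring.
Qed.

Definition phiB a b q z := Cseries (Tt a b q z).

Lemma phiB_is a b q z : (0 < q < 1)%R -> Cis_series (Tt a b q z) (phiB a b q z).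
Proof.
  intros Hq. destruct (phi_ex a b q (- b * z) Hq) as [l Hl]. unfold phiB.
  assert (E : Cseries (Tt a b q z) = l) by (apply Cseries_is; exact Hl). rewrite E. exact Hl.
Qed.

Lemma contig_series a b q z : (0 < q < 1)%R -> (forall j, 1 - b * RtoC (q ^ j) <> 0) ->
  (1 - b) * (1 - b * RtoC q) * phiB a b q z
  = (1 - b * RtoC q) * (1 - b) * phiB a (b * RtoC q) q z
    + (1 - b * RtoC q) * b * z * phiB a (b * RtoC q) q z
    - z * (a * b - RtoC q * b * b) * phiB a (b * RtoC q * RtoC q) q z.
Proof.
  intros Hq Hb.
  pose proof (phiB_is a b q z Hq) as H1.
  pose proof (phiB_is a (b * RtoC q) q z Hq) as H2.
  pose proof (phiB_is a (b * RtoC q * RtoC q) q z Hq) as H3.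
  apply (Cis_unique (fun n => (1 - b) * (1 - b * RtoC q) * Tt a b q z n)).
  apply Cis_scal; auto.
  set (w := fun m => (1 - b * RtoC q) * b * z * Tt a (b * RtoC q) q z m
                     - z * (a * b - RtoC q * b * b) * Tt a (b * RtoC q * RtoC q) q z m).
  assert (Hw : Cis_series w ((1 - b * RtoC q) * b * z * phiB a (b * RtoC q) q z
                     - z * (a * b - RtoC q * b * b) * phiB a (b * RtoC q * RtoC q) q z)).
  { apply Cis_minus; apply Cis_scal; auto. }
  apply Cis_shiftback in Hw.
  pose proof (Cis_plus _ _ _ _ (Cis_scal ((1 - b * RtoC q) * (1 - b)) _ _ H2) Hw) as H4.
  match goal with |- is_series _ ?X => replace X with ((1 - b * RtoC q) * (1 - b) * phiB a (b * RtoC q) q z +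
      ((1 - b * RtoC q) * b * z * phiB a (b * RtoC q) q z -
       z * (a * b - RtoC q * b * b) * phiB a (b * RtoC q * RtoC q) q z)) by ring end.
  eapply Cis_ext; [|exact H4]. intros n. destruct n as [|m].
  - unfold Tt. rewrite !pterm_0. ring.
  - rewrite (contig_term a b q z m Hq Hb). unfold w. ring.
Qed.


Lemma key_real r m : (0 <= r <= 1)%R -> (INR (S m) * (1 - r) * r ^ m <= 1 - r ^ (S m))%R.
Proof.
  intros Hr. induction m.
  - simpl. lra.
  - rewrite (S_INR (S m)).
    change (r ^ S m)%R with (r * r ^ m)%R. change (r ^ S (S m))%R with (r * (r * r ^ m))%R.
    change (r ^ S m)%R with (r * r ^ m)%R in IHm.
    set (p := (r * r ^ m)%R) in *. set (N := INR (S m)) in *.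
    assert (Hp : (0 <= p <= 1)%R) by (unfold p; split; [apply Rmult_le_pos; [lra|apply pow_le; lra] | apply (pow_le1 r (S m)); lra]).
    assert (A1 : (r * (N * (1 - r) * r ^ m) <= r * (1 - p))%R) by (apply Rmult_le_compat_l; lra).
    replace ((N + 1) * (1 - r) * p)%R with (r * (N * (1 - r) * r ^ m) + (1 - r) * p)%R by (unfold p; ring).
    assert (A2 : (0 <= (1 - r) * (1 - p))%R) by (apply Rmult_le_pos; lra).
    nra.
Qed.

Lemma term_real C0 r j i m (Gm : R) : (0 <= r < 1)%R -> (0 <= C0)%R ->
  (0 <= Gm <= (C0 / (1 - r) * r ^ (j + i + 2)) ^ m / INR (Factorial.fact m))%R ->
  (C0 * r ^ (j + i) * Gm <=
   (1 - r ^ S m) * (C0 / (1 - r) * r ^ j) ^ S m / INR (Factorial.fact (S m)) * (r ^ S m) ^ i)%R.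
Proof.
  intros Hr HC0 HG.
  set (tau := (C0 / (1 - r))%R).
  assert (Htau : (0 <= tau)%R) by (unfold tau; apply Rmult_le_pos; [lra| apply Rlt_le, Rinv_0_lt_compat; lra]).
  set (B := (tau * r ^ (j + i))%R).
  assert (HB : (0 <= B)%R) by (unfold B; apply Rmult_le_pos; [lra| apply pow_le; lra]).
  assert (E1 : ((tau * r ^ j) ^ S m * (r ^ S m) ^ i = B ^ S m)%R).
  { unfold B. rewrite <- pow_mult, Nat.mul_comm, pow_mult, <- Rpow_mult_distr, pow_add. f_equal; ring. }
  assert (E2 : (C0 * r ^ (j + i) = (1 - r) * B)%R) by (unfold B, tau; field; lra).
  assert (E3 : ((tau * r ^ (j + i + 2)) ^ m <= r ^ m * B ^ m)%R).
  { rewrite <- Rpow_mult_distr. apply pow_incr. split.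
    apply Rmult_le_pos; [lra| apply pow_le; lra].
    unfold B. replace (j + i + 2)%nat with (S (S (j + i))) by lia. simpl.
    assert (0 <= r ^ (j + i))%R by (apply pow_le; lra).
    assert (r * (r * r ^ (j + i)) <= r * r ^ (j + i))%R.
    { assert (r * r ^ (j+i) <= 1 * r ^ (j+i))%R by (apply Rmult_le_compat_r; lra).
      apply Rmult_le_compat_l; lra. }
    assert (0 <= tau * (r * (r * r ^ (j + i))))%R.
    { apply Rmult_le_pos; auto. apply Rmult_le_pos; [lra|]. apply Rmult_le_pos; lra. }
    replace (r * (tau * r ^ (j + i)))%R with (tau * (r * r ^ (j + i)))%R by ring.
    apply Rmult_le_compat_l; auto. }
  fold tau in HG.
  assert (Hf := INR_fact_lt_0 m).
  assert (HG2 : (Gm <= r ^ m * B ^ m / INR (Factorial.fact m))%R).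
  { eapply Rle_trans. apply HG. unfold Rdiv. apply Rmult_le_compat_r. apply Rlt_le, Rinv_0_lt_compat; auto. auto. }
  assert (Hfs : INR (Factorial.fact (S m)) = (INR (S m) * INR (Factorial.fact m))%R) by (rewrite fact_simpl, mult_INR; auto).
  assert (HSm : (0 < INR (S m))%R) by (apply lt_0_INR; lia).
  pose proof (INR_fact_lt_0 (S m)) as HfS.
  replace ((1 - r ^ S m) * (tau * r ^ j) ^ S m / INR (Factorial.fact (S m)) * (r ^ S m) ^ i)%R
    with ((1 - r ^ S m) * ((tau * r ^ j) ^ S m * (r ^ S m) ^ i) / INR (Factorial.fact (S m)))%R
    by (field; lra).
  rewrite E1, E2, Hfs.
  pose proof (key_real r m ltac:(lra)) as K.
  assert (HBm : (0 <= B ^ S m)%R) by (apply pow_le; auto).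
  assert (Hrm : (0 <= r ^ m)%R) by (apply pow_le; lra).
  assert (S1 : ((1 - r) * B * Gm <= (1 - r) * B * (r ^ m * B ^ m / INR (Factorial.fact m)))%R).
  { apply Rmult_le_compat_l. apply Rmult_le_pos; lra. auto. }
  eapply Rle_trans. apply S1.
  replace ((1 - r) * B * (r ^ m * B ^ m / INR (Factorial.fact m)))%R with
    ((INR (S m) * (1 - r) * r ^ m) * (B ^ S m / (INR (S m) * INR (Factorial.fact m))))%R
    by (change (B ^ S m)%R with (B * B ^ m)%R; field; lra).
  replace ((1 - r ^ S m) * B ^ S m / (INR (S m) * INR (Factorial.fact m)))%R with
    ((1 - r ^ S m) * (B ^ S m / (INR (S m) * INR (Factorial.fact m))))%R by (field; lra).
  apply Rmult_le_compat_r; auto.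
  apply Rmult_le_pos; auto. apply Rlt_le, Rinv_0_lt_compat, Rmult_lt_0_compat; lra.
Qed.

Definition Gterm (x : nat -> C) m j i := x (j + i)%nat * x (j + i + 1)%nat * Gnest x m (j + i + 2)%nat.

Lemma Gnest_S x m j : Gnest x (S m) j = Cseries (Gterm x m j).
Proof. reflexivity. Qed.

Definition Yb (x : nat -> C) (C0 r : R) := forall k, (Cmod (x k * x (k + 1)%nat) <= C0 * r ^ k)%R.

Definition Bd (C0 r : R) m j := ((C0 / (1 - r) * r ^ j) ^ m / INR (Factorial.fact m))%R.

Lemma G_step x C0 r m : (0 <= r < 1)%R -> (0 <= C0)%R -> Yb x C0 r ->
  (forall j, (Cmod (Gnest x m j) <= Bd C0 r m j)%R) ->
  forall j, Cis_series (Gterm x m j) (Gnest x (S m) j) /\ (Cmod (Gnest x (S m) j) <= Bd C0 r (S m) j)%R.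
Proof.
  intros Hr HC0 HY IHm j.
  set (D := ((1 - r ^ S m) * (C0 / (1 - r) * r ^ j) ^ S m / INR (Factorial.fact (S m)))%R).
  assert (Hb : forall i, (Cmod (Gterm x m j i) <= D * (r ^ S m) ^ i)%R).
  { intros i. unfold Gterm. rewrite Cmod_mult. unfold D.
    apply Rle_trans with (C0 * r ^ (j + i) * Cmod (Gnest x m (j + i + 2)))%R.
    apply Rmult_le_compat_r. apply Cmod_ge_0. apply HY.
    apply term_real; auto. split. apply Cmod_ge_0. apply (IHm (j + i + 2)%nat). }
  assert (Hrm : (0 <= r ^ S m < 1)%R).
  { split. apply pow_le; lra. change (r ^ S m)%R with (r * r ^ m)%R.
    assert (r ^ m <= 1)%R by (apply pow_le1; lra). assert (0 <= r ^ m)%R by (apply pow_le; lra). nra. }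
  destruct (geom_dom (Gterm x m j) D (r ^ S m) Hrm Hb) as [l Hl].
  assert (E : Gnest x (S m) j = l) by (rewrite Gnest_S; apply Cseries_is; exact Hl).
  rewrite E. split. exact Hl.
  eapply Rle_trans. apply (geom_dom_bound (Gterm x m j) D (r ^ S m)); eauto.
  unfold D, Bd. right. field. split. apply Rgt_not_eq, INR_fact_lt_0. lra.
Qed.

Lemma G_bound x C0 r : (0 <= r < 1)%R -> (0 <= C0)%R -> Yb x C0 r ->
  forall m j, (Cmod (Gnest x m j) <= Bd C0 r m j)%R.
Proof.
  intros Hr HC0 HY m. induction m; intros j.
  - unfold Bd. simpl. rewrite Cmod_1. lra.
  - apply (G_step x C0 r m Hr HC0 HY IHm j).
Qed.

Lemma G_is x C0 r : (0 <= r < 1)%R -> (0 <= C0)%R -> Yb x C0 r ->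
  forall m j, Cis_series (Gterm x m j) (Gnest x (S m) j).
Proof.
  intros Hr HC0 HY m j. apply (G_step x C0 r m Hr HC0 HY (G_bound x C0 r Hr HC0 HY m) j).
Qed.

Lemma Cis_tail (a : nat -> C) (l : C) : Cis_series a l -> Cis_series (fun k => a (S k)) (l - a O).
Proof.
  intros H. apply is_series_incr_1.
  match goal with |- is_series _ ?X => replace X with l end. exact H.
  change (@eq C l (Cplus (l - a O) (a O))). ring.
Qed.

Lemma G_split x C0 r : (0 <= r < 1)%R -> (0 <= C0)%R -> Yb x C0 r ->
  forall m j, Gnest x (S m) j = x j * x (j + 1)%nat * Gnest x m (j + 2)%nat + Gnest x (S m) (S j).
Proof.
  intros Hr HC0 HY m j.
  pose proof (G_is x C0 r Hr HC0 HY m j) as H1.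
  pose proof (G_is x C0 r Hr HC0 HY m (S j)) as H2.
  apply Cis_tail in H1.
  assert (E : Gnest x (S m) (S j) = Gnest x (S m) j - Gterm x m j O).
  { apply (Cis_unique (Gterm x m (S j))); auto.
    eapply Cis_ext; [|exact H1]. intros i. unfold Gterm. f_equal; [f_equal|]; f_equal; lia. }
  rewrite E. unfold Gterm. rewrite !Nat.add_0_r. ring.
Qed.

Definition Fterm (x : nat -> C) j m := RtoC ((-1) ^ (S m)) * Gnest x (S m) j.
Definition Fs (x : nat -> C) j := 1 + Cseries (Fterm x j).

Lemma frakF_Fs x : frakF x = Fs x 1.
Proof. reflexivity. Qed.

Lemma Fterm_bound x C0 r j m : (0 <= r < 1)%R -> (0 <= C0)%R -> Yb x C0 r ->
  (Cmod (Fterm x j m) <= Bd C0 r (S m) j)%R.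
Proof.
  intros Hr HC0 HY. unfold Fterm. rewrite Cmod_mult, Cmod_R, <- RPow_abs.
  replace (Rabs (-1)) with 1%R by (rewrite Rabs_left; lra). rewrite pow1, Rmult_1_l.
  apply (G_bound x C0 r Hr HC0 HY).
Qed.

Lemma Csimp1 (l : C) : 1 + l - 1 = l.
Proof. ring. Qed.

Lemma F_is x C0 r j : (0 <= r < 1)%R -> (0 <= C0)%R -> Yb x C0 r ->
  Cis_series (Fterm x j) (Fs x j - 1).
Proof.
  intros Hr HC0 HY.
  set (X := (C0 / (1 - r) * r ^ j)%R).
  assert (Hex : ex_series (fun m => Bd C0 r (S m) j)).
  { pose proof (is_exp_Reals X) as H. unfold is_pseries in H.
    assert (H' : ex_series (fun k => scal (pow_n X k) (/ INR (Factorial.fact k)))%R) by (eexists; exact H).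
    apply ex_series_incr_1 in H'.
    eapply ex_series_ext; [| exact H']. intros m.
    unfold Bd. fold X. rewrite pow_n_pow. reflexivity. }
  assert (He : ex_series (K:=C_AbsRing) (V:=C_CompleteNormedModule) (Fterm x j)).
  { apply (ex_series_le (Fterm x j) (fun m => Bd C0 r (S m) j)); auto.
    intros m. apply (Fterm_bound x C0 r j m Hr HC0 HY). }
  destruct He as [l Hl].
  assert (E : Cseries (Fterm x j) = l) by (apply Cseries_is; exact Hl).
  unfold Fs. rewrite E. match goal with |- is_series _ ?X => replace X with l end. exact Hl.
  exact (eq_sym (Csimp1 l)).
Qed.

Lemma F_full x C0 r j : (0 <= r < 1)%R -> (0 <= C0)%R -> Yb x C0 r ->
  Cis_series (fun m => RtoC ((-1) ^ m) * Gnest x m j) (Fs x j).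
Proof.
  intros Hr HC0 HY. apply is_series_decr_1.
  match goal with |- is_series _ ?X => replace X with (Fs x j - 1) end.
  apply (F_is x C0 r j Hr HC0 HY).
  change (@eq C (Fs x j - 1) (Cplus (Fs x j) (Copp (RtoC ((-1) ^ 0) * 1)))). simpl. ring.
Qed.

Lemma F_rec x C0 r j : (0 <= r < 1)%R -> (0 <= C0)%R -> Yb x C0 r ->
  Fs x j = Fs x (S j) - x j * x (j + 1)%nat * Fs x (j + 2)%nat.
Proof.
  intros Hr HC0 HY.
  pose proof (F_is x C0 r j Hr HC0 HY) as H1.
  pose proof (F_is x C0 r (S j) Hr HC0 HY) as H2.
  pose proof (F_full x C0 r (j + 2) Hr HC0 HY) as H3.
  pose proof (Cis_plus _ _ _ _ (Cis_scal (- (x j * x (j + 1)%nat)) _ _ H3) H2) as H4.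
  assert (E : Fs x j - 1 = - (x j * x (j + 1)%nat) * Fs x (j + 2)%nat + (Fs x (S j) - 1)).
  { apply (Cis_unique (Fterm x j)); auto.
    eapply Cis_ext; [|exact H4]. intros m. unfold Fterm.
    rewrite (G_split x C0 r Hr HC0 HY m j).
    replace ((-1) ^ S m)%R with (- (-1) ^ m)%R by (simpl; ring). rewrite RtoC_opp. ring. }
  replace (Fs x j) with ((Fs x j - 1) + 1) by ring. rewrite E. ring.
Qed.

Lemma F_near1 x C0 r j : (0 <= r < 1)%R -> (0 <= C0)%R -> Yb x C0 r ->
  (C0 / (1 - r) * r ^ j <= 1/2)%R -> (Cmod (Fs x j - 1) <= 2 * (C0 / (1 - r) * r ^ j))%R.
Proof.
  intros Hr HC0 HY HX.
  set (X := (C0 / (1 - r) * r ^ j)%R) in *.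
  assert (HX0 : (0 <= X)%R).
  { unfold X. apply Rmult_le_pos. apply Rmult_le_pos; [lra| apply Rlt_le, Rinv_0_lt_compat; lra]. apply pow_le; lra. }
  eapply Rle_trans. apply (geom_dom_bound (Fterm x j) X X); [lra| | apply (F_is x C0 r j Hr HC0 HY)].
  - intros m. eapply Rle_trans. apply (Fterm_bound x C0 r j m Hr HC0 HY). unfold Bd. fold X.
    assert (H1 : (1 <= INR (Factorial.fact (S m)))%R).
    { apply (le_INR 1). pose proof (Factorial.lt_O_fact (S m)). lia. }
    assert (0 <= X ^ S m)%R by (apply pow_le; auto).
    unfold Rdiv. rewrite <- (Rmult_1_r (X * X ^ m)).
    apply Rmult_le_compat. auto. apply Rlt_le, Rinv_0_lt_compat. lra. simpl. lra.
    rewrite <- Rinv_1. apply Rinv_le_contravar; lra.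
  - apply Rmult_le_reg_r with (1 - X)%R. lra. unfold Rdiv. rewrite Rmult_assoc, Rinv_l by lra. nra.
Qed.

Lemma F_cv x C0 r : (0 <= r < 1)%R -> (0 <= C0)%R -> Yb x C0 r -> Ccv (Fs x) 1.
Proof.
  intros Hr HC0 HY eps He.
  set (tau := (C0 / (1 - r))%R).
  assert (Ht : (0 <= tau)%R) by (unfold tau; apply Rmult_le_pos; [lra| apply Rlt_le, Rinv_0_lt_compat; lra]).
  destruct (Req_dec r 0) as [Hr0|Hr0].
  - exists 1%nat. intros n Hn. assert (E : (r ^ n = 0)%R) by (rewrite Hr0; apply pow_i; lia).
    assert (K : (Cmod (Fs x n - 1) <= 2 * (C0 / (1 - r) * r ^ n))%R).
    { apply F_near1; auto. rewrite E. lra. }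
    rewrite E in K. lra.
  - destruct (pow_small r (Rmin (/ 2) (eps / 4) / (tau + 1))%R) as [N HN]. lra.
    apply Rdiv_lt_0_compat. apply Rmin_pos; lra. lra.
    exists N. intros n Hn. specialize (HN n Hn).
    assert (Hrn : (0 <= r ^ n)%R) by (apply pow_le; lra).
    assert (Hm : (tau * r ^ n <= Rmin (/ 2) (eps / 4))%R).
    { apply Rmult_lt_compat_r with (r := (tau + 1)%R) in HN; [|lra].
      unfold Rdiv in HN. rewrite Rmult_assoc, Rinv_l, Rmult_1_r in HN by lra. nra. }
    pose proof (Rmin_l (/2) (eps/4)). pose proof (Rmin_r (/2) (eps/4)).
    assert (K : (Cmod (Fs x n - 1)%C <= 2 * (C0 / (1 - r) * r ^ n))%R) by (apply F_near1; auto; fold tau; lra).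
    fold tau in K. lra.
Qed.


Lemma Ccv_shiftn u l J : Ccv u l -> Ccv (fun k => u (J + k)%nat) l.
Proof. intros H eps He. destruct (H eps He) as [N HN]. exists N. intros n Hn. apply HN. lia. Qed.

Lemma Ccv_opp u l : Ccv u l -> Ccv (fun n => - u n) (- l).
Proof. intros H. apply (Ccv_ext (fun n => (-1) * u n)). intros; ring.
  replace (- l) with ((-1) * l) by ring. apply Ccv_mult. apply Ccv_const. auto. Qed.

Lemma Yb_small x C0 r : (0 <= r < 1)%R -> (0 <= C0)%R -> Yb x C0 r ->
  exists N, forall k, (N <= k)%nat -> (Cmod (x k * x (k + 1)%nat) <= 1)%R.
Proof.
  intros Hr HC0 HY.
  set (r' := ((1 + r) / 2)%R).
  destruct (pow_small r' (/ (C0 + 1))%R) as [N HN]. unfold r'; lra. apply Rinv_0_lt_compat; lra.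
  exists N. intros k Hk. eapply Rle_trans. apply HY.
  specialize (HN k Hk).
  assert (r ^ k <= r' ^ k)%R by (apply pow_incr; unfold r'; lra).
  assert (0 <= r ^ k)%R by (apply pow_le; lra).
  assert (r' ^ k * (C0 + 1) < 1)%R.
  { apply Rmult_lt_compat_r with (r := (C0 + 1)%R) in HN; [|lra]. rewrite Rinv_l in HN; lra. }
  nra.
Qed.

Theorem frakF_unique x C0 r (psi : nat -> C) : (0 <= r < 1)%R -> (0 <= C0)%R -> Yb x C0 r ->
  (forall j, (1 <= j)%nat -> psi j = psi (S j) - x j * x (j + 1)%nat * psi (j + 2)%nat) ->
  Ccv psi 1 -> frakF x = psi 1%nat.
Proof.
  intros Hr HC0 HY Hpsi Hcv.
  set (F := Fs x).
  assert (HF : forall j, F j = F (S j) - x j * x (j + 1)%nat * F (S (S j))).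
  { intros j. unfold F. rewrite (F_rec x C0 r j Hr HC0 HY) at 1. do 3 f_equal. lia. }
  assert (HFc : Ccv F 1) by (apply (F_cv x C0 r Hr HC0 HY)).
  set (W := fun j => F j * psi (S j) - F (S j) * psi j).
  assert (HW : forall j, (1 <= j)%nat -> W j = x j * x (j + 1)%nat * W (S j)).
  { intros j Hj. unfold W. rewrite (HF j), (Hpsi j Hj). replace (j + 2)%nat with (S (S j)) by lia. ring. }
  assert (HWc : Ccv W 0).
  { unfold W. replace (RtoC 0) with (1 * 1 - 1 * 1) by ring.
    apply Ccv_plus. apply Ccv_mult; auto. apply Ccv_S; auto.
    apply (Ccv_ext (fun n => - (F (S n) * psi n))). intros; reflexivity.
    apply Ccv_opp. apply Ccv_mult; auto. apply Ccv_S; auto. }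
  destruct (Yb_small x C0 r Hr HC0 HY) as [N1 HN1].
  destruct (HFc (1/2)%R ltac:(lra)) as [N2 HN2].
  set (J := (N1 + N2 + 1)%nat).
  assert (HFJ : forall k, (J <= k)%nat -> F k <> 0).
  { intros k Hk E. specialize (HN2 k ltac:(unfold J in *; lia)). rewrite E in HN2.
    replace (0 - 1) with (-(1)) in HN2 by ring. rewrite Cmod_opp, Cmod_1 in HN2. lra. }
  assert (HWmono : forall j n, (J <= j)%nat -> (Cmod (W j) <= Cmod (W (j + n)%nat))%R).
  { intros j n Hj. induction n. rewrite Nat.add_0_r. lra.
    eapply Rle_trans. apply IHn. rewrite (HW (j + n)%nat) by (unfold J in *; lia).
    rewrite Cmod_mult. replace (S (j + n)) with (j + S n)%nat by lia.
    pose proof (HN1 (j + n)%nat ltac:(unfold J in *; lia)).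
    pose proof (Cmod_ge_0 (W (j + S n)%nat)).
    assert (Cmod (x (j + n)%nat * x (j + n + 1)%nat) * Cmod (W (j + S n)%nat) <= 1 * Cmod (W (j + S n)%nat))%R
      by (apply Rmult_le_compat_r; auto). lra. }
  assert (HW0 : forall j, (J <= j)%nat -> W j = 0).
  { intros j Hj. apply Cmod_eq_0. apply Rle_antisym; [|apply Cmod_ge_0].
    apply Rnot_lt_le. intros Hlt.
    destruct (HWc (Cmod (W j)) Hlt) as [M HM].
    specialize (HM (j + M)%nat ltac:(lia)). replace (W (j + M)%nat - 0) with (W (j + M)%nat) in HM by ring.
    specialize (HWmono j M Hj). lra. }
  set (lam := psi J / F J).
  assert (Hlam : forall k, psi (J + k)%nat = lam * F (J + k)%nat).
  { induction k.
    - rewrite Nat.add_0_r. unfold lam. field. apply HFJ. lia.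
    - assert (E := HW0 (J + k)%nat ltac:(lia)). unfold W in E.
      replace (J + S k)%nat with (S (J + k)) by lia.
      assert (HFk : F (J + k)%nat <> 0) by (apply HFJ; lia).
      assert (E2 : F (J + k)%nat * (psi (S (J + k)) - lam * F (S (J + k))) = 0).
      { rewrite <- E. rewrite IHk. ring. }
      assert (E3 : psi (S (J + k)) - lam * F (S (J + k)) = 0).
      { replace (psi (S (J + k)) - lam * F (S (J + k))) with
          (/ F (J + k)%nat * (F (J + k)%nat * (psi (S (J + k)) - lam * F (S (J + k))))) by (field; auto).
        rewrite E2. ring. }
      replace (psi (S (J + k))) with ((psi (S (J + k)) - lam * F (S (J + k))) + lam * F (S (J + k))) by ring.
      rewrite E3. ring. }
  assert (Hl1 : lam = 1).
  { assert (H : Ccv (fun k => lam * F (J + k)%nat) (lam * 1)) by (apply Ccv_mult; [apply Ccv_const| apply Ccv_shiftn; auto]).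
    rewrite Cmult_1_r in H.
    apply (Ccv_unique (fun k => psi (J + k)%nat)).
    apply (Ccv_ext (fun k => lam * F (J + k)%nat)). intros; symmetry; apply Hlam. exact H.
    apply Ccv_shiftn; auto. }
  assert (Heq : forall k, psi (J + k)%nat = F (J + k)%nat).
  { intros k. rewrite Hlam, Hl1. ring. }
  assert (Hback : forall d, (d <= J - 1)%nat -> psi (J - d)%nat = F (J - d)%nat /\ psi (S (J - d)) = F (S (J - d))).
  { induction d; intros Hd.
    - replace (J - 0)%nat with (J + 0)%nat by lia. rewrite Heq. split; auto.
      replace (S (J + 0)) with (J + 1)%nat by lia. apply Heq.
    - destruct (IHd ltac:(lia)) as [H1 H2].
      replace (S (J - S d)) with (J - d)%nat by (unfold J in *; lia).
      split; auto.
      rewrite (Hpsi (J - S d)%nat) by (unfold J in *; lia).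
      rewrite (HF (J - S d)%nat).
      replace (S (J - S d)) with (J - d)%nat by (unfold J in *; lia).
      replace (J - S d + 2)%nat with (S (J - d)) by (unfold J in *; lia).
      rewrite H1, H2. reflexivity. }
  destruct (Hback (J - 1)%nat ltac:(lia)) as [H1 _].
  replace (J - (J - 1))%nat with 1%nat in H1 by (unfold J in *; lia).
  rewrite frakF_Fs. fold F. rewrite H1. reflexivity.
Qed.


Lemma exp_small t : (0 <= t <= 1/2)%R -> (exp t - 1 <= 2 * t)%R.
Proof.
  intros Ht. pose proof (exp_ineq1_le (- t)) as H.
  assert (Hp : (0 < exp (- t))%R) by apply exp_pos.
  assert (E : (exp t = / exp (- t))%R) by (rewrite exp_Ropp, Rinv_inv; auto).
  rewrite E.
  assert (/ exp (- t) <= / (1 - t))%R by (apply Rinv_le_contravar; lra).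
  assert (/ (1 - t) <= 1 + 2 * t)%R.
  { apply (Rmult_le_reg_r (1 - t)). lra. rewrite Rinv_l by lra. nra. }
  lra.
Qed.

Lemma Ccv_geom (u : nat -> C) l q N K : (0 < q < 1)%R ->
  (forall n, (N <= n)%nat -> (Cmod (u n - l) <= K * q ^ n)%R) -> Ccv u l.
Proof.
  intros Hq H eps He.
  destruct (pow_small q (eps / (Rabs K + 1))%R Hq) as [M HM].
  apply Rdiv_lt_0_compat; [lra| pose proof (Rabs_pos K); lra].
  exists (N + M)%nat. intros n Hn. eapply Rle_lt_trans. apply H. lia.
  specialize (HM n ltac:(lia)).
  assert (Hqn : (0 < q ^ n)%R) by (apply pow_lt; lra).
  assert (K * q ^ n <= Rabs K * q ^ n)%R by (apply Rmult_le_compat_r; [lra| apply Rle_abs]).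
  assert (Rabs K * q ^ n < (Rabs K + 1) * (eps / (Rabs K + 1)))%R.
  { pose proof (Rabs_pos K). apply Rle_lt_trans with ((Rabs K + 1) * q ^ n)%R. nra.
    apply Rmult_lt_compat_l; lra. }
  replace ((Rabs K + 1) * (eps / (Rabs K + 1)))%R with eps in H1 by (field; pose proof (Rabs_pos K); lra).
  lra.
Qed.

Lemma Q_to_1 (b : C) q : (0 < q < 1)%R -> Ccv (fun n => qpoch_inf (b * RtoC (q ^ n)) q) 1.
Proof.
  intros Hq.
  destruct (pow_small q ((1 - q) / (2 * (Cmod b + 1)))%R Hq) as [N HN].
  apply Rdiv_lt_0_compat; [lra| pose proof (Cmod_ge_0 b); lra].
  apply (Ccv_geom _ _ q N (2 * Cmod b / (1 - q))%R Hq).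
  intros n Hn. specialize (HN n Hn).
  assert (Hqn : (0 < q ^ n)%R) by (apply pow_lt; lra).
  assert (Hm : Cmod (b * RtoC (q ^ n)) = (Cmod b * q ^ n)%R) by (rewrite Cmod_mult, Cmod_R, Rabs_pos_eq; lra).
  eapply Rle_trans. apply qpoch_inf_bound. lra.
  rewrite Hm. pose proof (Cmod_ge_0 b).
  assert (Hs : (Cmod b * q ^ n / (1 - q) <= 1/2)%R).
  { apply Rmult_lt_compat_r with (r := (2 * (Cmod b + 1))%R) in HN; [|lra].
    unfold Rdiv in *. rewrite Rmult_assoc, Rinv_l, Rmult_1_r in HN by lra.
    apply (Rmult_le_reg_r (1 - q)). lra. rewrite Rmult_assoc, Rinv_l by lra. nra. }
  eapply Rle_trans. apply exp_small. split; auto. apply Rmult_le_pos. nra. apply Rlt_le, Rinv_0_lt_compat; lra.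
  right. field. lra.
Qed.

Lemma phi_to_1 a (b : C) q z : (0 < q < 1)%R -> Ccv (fun n => phiB a (b * RtoC (q ^ n)) q z) 1.
Proof.
  intros Hq.
  set (A := ((1 + Cmod a) * 4 / (1 - q))%R).
  assert (HA : (0 <= A)%R).
  { unfold A. pose proof (Cmod_ge_0 a). unfold Rdiv. apply Rmult_le_pos. lra. apply Rlt_le, Rinv_0_lt_compat; lra. }
  destruct (pow_small q (/ (2 * (Cmod b + 1) * (A * Cmod z + 1)))%R Hq) as [N HN].
  apply Rinv_0_lt_compat. pose proof (Cmod_ge_0 b). pose proof (Cmod_ge_0 z).
  assert (0 <= A * Cmod z)%R by (apply Rmult_le_pos; auto). apply Rmult_lt_0_compat; lra.
  apply (Ccv_geom _ _ q N (2 * (A * (Cmod b * Cmod z)))%R Hq).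
  intros n Hn. specialize (HN n Hn).
  assert (Hqn : (0 < q ^ n)%R) by (apply pow_lt; lra).
  assert (Hm : Cmod (b * RtoC (q ^ n)) = (Cmod b * q ^ n)%R) by (rewrite Cmod_mult, Cmod_R, Rabs_pos_eq; lra).
  pose proof (Cmod_ge_0 b). pose proof (Cmod_ge_0 z).
  assert (HAz : (0 <= A * Cmod z)%R) by (apply Rmult_le_pos; auto).
  assert (Hs : (q ^ n * (2 * (Cmod b + 1) * (A * Cmod z + 1)) < 1)%R).
  { apply Rmult_lt_compat_r with (r := (2 * (Cmod b + 1) * (A * Cmod z + 1))%R) in HN.
    rewrite Rinv_l in HN. lra. apply Rgt_not_eq. apply Rmult_lt_0_compat; lra. apply Rmult_lt_0_compat; lra. }
  assert (Hbn : (Cmod b * q ^ n <= 1/2)%R).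
  { assert (q ^ n * (2 * (Cmod b + 1)) <= q ^ n * (2 * (Cmod b + 1) * (A * Cmod z + 1)))%R.
    { apply Rmult_le_compat_l. lra. assert (0 <= 2 * (Cmod b + 1))%R by lra. nra. }
    assert (q ^ n * (2 * (Cmod b + 1)) = 2 * (Cmod b * q ^ n) + 2 * q ^ n)%R by ring.
    lra. }
  assert (HZ : Cmod (- (b * RtoC (q ^ n)) * z) = (Cmod b * q ^ n * Cmod z)%R).
  { rewrite Cmod_mult, Cmod_opp, Hm. reflexivity. }
  assert (Hc : ((1 + Cmod a) * 4 / (1 - q) * Cmod (- (b * RtoC (q ^ n)) * z) <= 1/2)%R).
  { rewrite HZ. fold A.
    assert (q ^ n * (2 * (Cmod b + 1) * (A * Cmod z)) <= q ^ n * (2 * (Cmod b + 1) * (A * Cmod z + 1)))%R.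
    { apply Rmult_le_compat_l. lra. assert (0 <= 2 * (Cmod b + 1))%R by lra. nra. }
    assert (2 * (A * (Cmod b * q ^ n * Cmod z)) <= q ^ n * (2 * (Cmod b + 1) * (A * Cmod z)))%R.
    { replace (q ^ n * (2 * (Cmod b + 1) * (A * Cmod z)))%R with ((A * Cmod z) * q ^ n * (2 * (Cmod b + 1)))%R by ring.
      replace (2 * (A * (Cmod b * q ^ n * Cmod z)))%R with ((A * Cmod z) * q ^ n * (2 * Cmod b))%R by ring.
      apply Rmult_le_compat_l. apply Rmult_le_pos; lra. lra. }
    lra. }
  unfold phiB, Tt.
  eapply Rle_trans. apply phi_small; auto. rewrite Hm; auto.
  rewrite HZ. fold A. right. ring.
Qed.


Definition Bn (b : C) (q : R) n := b * RtoC (q ^ n).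
Definition Rf a b q z := qpoch_inf b q / qpoch_inf ((1 - z) * b) q * phiB a b q z.
Definition Yf a (q : R) z (be : C) :=
  z * (a * be - RtoC q * be * be) / ((1 - (1 - z) * be) * (1 - (1 - z) * (be * RtoC q))).

Lemma Bn_S b q n : Bn b q (S n) = Bn b q n * RtoC q.
Proof. unfold Bn. simpl. rewrite RtoC_mult. ring. Qed.

Lemma Bn_0 b q : Bn b q 0 = b.
Proof. unfold Bn. simpl. ring. Qed.

Lemma Rf_rec a q z be : (0 < q < 1)%R -> (forall j, 1 - be * RtoC (q ^ j) <> 0) ->
  qpoch_inf ((1 - z) * be) q <> 0 ->
  Rf a be q z = Rf a (be * RtoC q) q z - Yf a q z be * Rf a (be * RtoC q * RtoC q) q z.
Proof.
  intros Hq Hb HP.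
  assert (Hq' : (0 <= q < 1)%R) by lra.
  set (c := 1 - z) in *.
  pose proof (qpoch_inf_shift be q Hq') as Ea.
  pose proof (qpoch_inf_shift (be * RtoC q) q Hq') as Eb.
  pose proof (qpoch_inf_shift (c * be) q Hq') as Ec.
  replace (c * be * RtoC q) with (c * (be * RtoC q)) in Ec by ring.
  pose proof (qpoch_inf_shift (c * (be * RtoC q)) q Hq') as Ed.
  replace (c * (be * RtoC q) * RtoC q) with (c * (be * RtoC q * RtoC q)) in Ed by ring.
  assert (N1 : 1 - c * be <> 0 /\ qpoch_inf (c * (be * RtoC q)) q <> 0).
  { rewrite Ec in HP. split; intros E; apply HP; rewrite E; ring. }
  destruct N1 as [N1 N2].
  assert (N3 : 1 - c * (be * RtoC q) <> 0 /\ qpoch_inf (c * (be * RtoC q * RtoC q)) q <> 0).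
  { rewrite Ed in N2. split; intros E; apply N2; rewrite E; ring. }
  destruct N3 as [N3 N4].
  assert (H0 : 1 - be <> 0) by (pose proof (Hb 0%nat) as H; simpl in H; rewrite Cmult_1_r in H; exact H).
  assert (H1 : 1 - be * RtoC q <> 0) by (pose proof (Hb 1%nat) as H; simpl in H; rewrite Rmult_1_r in H; exact H).
  pose proof (contig_series a be q z Hq Hb) as Ct.
  unfold Rf, Yf. fold c.
  rewrite Ea, Ec. rewrite !Eb, !Ed.
  set (u := qpoch_inf (be * RtoC q * RtoC q) q).
  set (v := qpoch_inf (c * (be * RtoC q * RtoC q)) q).
  set (p0 := phiB a be q z) in *. set (p1 := phiB a (be * RtoC q) q z) in *.
  set (p2 := phiB a (be * RtoC q * RtoC q) q z) in *.
  assert (Ep : p0 = ((1 - be * RtoC q) * (1 - be) * p1 + (1 - be * RtoC q) * be * z * p1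
      - z * (a * be - RtoC q * be * be) * p2) / ((1 - be) * (1 - be * RtoC q))).
  { rewrite <- Ct. field. auto. }
  rewrite Ep. unfold c. unfold c in N1, N3, v. field. repeat split; auto.
Qed.

Definition xs (q : R) (alpha gamma z w : C) : nat -> C := fun k : nat =>
           qpow q ((alpha + gamma + INR k) / 2 - RtoC (3 / 4))
           * qpoch_inf (qpow q (gamma - alpha + INR k)) (q ^ 2) * w
           / (qpoch_inf (qpow q (gamma - alpha + INR k + 1)) (q ^ 2)
              * (1 - (1 - z) * qpow q (gamma + INR k - 1))).

Lemma qpow_1 q : (0 < q)%R -> qpow q 1 = RtoC q.
Proof. intros Hq. change (qpow q (RtoC (INR 1)) = RtoC q). rewrite qpow_nat by auto. f_equal. ring. Qed.

Lemma qpow_gn q g n : (0 < q)%R -> qpow q (g + INR n) = qpow q g * RtoC (q ^ n).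
Proof. intros Hq. rewrite qpow_add, qpow_nat; auto. Qed.

Lemma xprod q alpha gamma z w n : (0 < q < 1)%R -> w * w = z ->
  qpoch_inf (qpow q (gamma - alpha + INR (S n) + 1)) (q ^ 2) <> 0 ->
  qpoch_inf (qpow q (gamma - alpha + INR (S n + 1) + 1)) (q ^ 2) <> 0 ->
  1 - (1 - z) * qpow q (gamma + INR (S n) - 1) <> 0 ->
  1 - (1 - z) * qpow q (gamma + INR (S n + 1) - 1) <> 0 ->
  xs q alpha gamma z w (S n) * xs q alpha gamma z w (S n + 1)%nat
  = Yf (qpow q alpha) q z (Bn (qpow q gamma) q n).
Proof.
  intros Hq Hw HM1 HM2 HD1 HD2.
  assert (Hq0 : (0 < q)%R) by lra.
  set (a := qpow q alpha). set (b := qpow q gamma).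
  assert (F5 : qpow q (gamma + INR (S n) - 1) = Bn b q n).
  { unfold Bn, b. rewrite <- qpow_gn by auto. f_equal. rewrite S_INR, RtoC_plus. ring. }
  assert (F6 : qpow q (gamma + INR (S n + 1) - 1) = Bn b q n * RtoC q).
  { unfold Bn, b. rewrite <- qpow_gn by auto. rewrite <- (qpow_1 q Hq0), <- !qpow_add. f_equal.
    rewrite plus_INR, S_INR, !RtoC_plus. simpl INR. ring. }
  assert (F2 : qpoch_inf (qpow q (gamma - alpha + INR (S n + 1))) (q ^ 2)
             = qpoch_inf (qpow q (gamma - alpha + INR (S n) + 1)) (q ^ 2)).
  { do 2 f_equal. rewrite plus_INR, !RtoC_plus. simpl INR. ring. }
  set (A := qpow q (gamma - alpha + INR (S n))).
  assert (F3 : qpoch_inf A (q ^ 2) = (1 - A) * qpoch_inf (qpow q (gamma - alpha + INR (S n + 1) + 1)) (q ^ 2)).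
  { rewrite qpoch_inf_shift. f_equal. f_equal. unfold A.
    rewrite <- (qpow_nat q 2 Hq0), <- qpow_add. f_equal. rewrite plus_INR, RtoC_plus. simpl INR.
    rewrite RtoC_plus. ring.
    split. apply pow_le; lra. simpl. nra. }
  assert (F4 : a * A = Bn b q n * RtoC q).
  { unfold a, A, Bn, b. rewrite <- qpow_add, <- qpow_gn by auto. rewrite <- (qpow_1 q Hq0), <- qpow_add. f_equal.
    rewrite S_INR, !RtoC_plus. ring. }
  assert (F1 : qpow q ((alpha + gamma + INR (S n)) / 2 - RtoC (3 / 4))
             * qpow q ((alpha + gamma + INR (S n + 1)) / 2 - RtoC (3 / 4)) = a * Bn b q n).
  { unfold a, Bn, b. rewrite <- qpow_gn by auto. rewrite <- !qpow_add. f_equal.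
    rewrite plus_INR, !S_INR, !RtoC_plus. rewrite RtoC_div by lra. rewrite INR_0. field. }
  unfold xs. rewrite F5, F6, F2. fold A. rewrite F3. rewrite F5, F6 in *.
  unfold Yf. fold a b. rewrite <- Hw.
  set (P1 := qpow q ((alpha + gamma + INR (S n)) / 2 - RtoC (3 / 4))) in *.
  set (P2 := qpow q ((alpha + gamma + INR (S n + 1)) / 2 - RtoC (3 / 4))) in *.
  set (M1 := qpoch_inf (qpow q (gamma - alpha + INR (S n) + 1)) (q ^ 2)) in *.
  set (M2 := qpoch_inf (qpow q (gamma - alpha + INR (S n + 1) + 1)) (q ^ 2)) in *.
  set (B := Bn b q n) in *.
  transitivity ((P1 * P2) * (1 - A) * (w * w) / ((1 - (1 - w * w) * B) * (1 - (1 - w * w) * (B * RtoC q)))).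
  { rewrite <- Hw in HD1, HD2. field. repeat split; auto. }
  rewrite F1.
  replace (a * B * (1 - A)) with (a * B - B * (a * A)) by ring. rewrite F4.
  field. rewrite <- Hw in HD1, HD2. split; auto.
Qed.

Lemma glob_bound (y : nat -> C) r N K : (0 < r)%R ->
  (forall k, (N <= k)%nat -> (Cmod (y k) <= K * r ^ k)%R) ->
  exists C0, (0 <= C0)%R /\ forall k, (Cmod (y k) <= C0 * r ^ k)%R.
Proof.
  revert K. induction N; intros K Hr H.
  - exists (Rmax K 0). split. apply Rmax_r. intros k. eapply Rle_trans. apply H. lia.
    apply Rmult_le_compat_r. apply pow_le; lra. apply Rmax_l.
  - apply (IHN (Rmax K 0 + Cmod (y N) / r ^ N)%R Hr). intros k Hk.
    assert (Hrk : (0 < r ^ k)%R) by (apply pow_lt; lra).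
    assert (0 <= Cmod (y N) / r ^ N)%R by (apply Rmult_le_pos; [apply Cmod_ge_0| apply Rlt_le, Rinv_0_lt_compat, pow_lt; lra]).
    destruct (Nat.eq_dec k N) as [->|Hne].
    + assert (Cmod (y N) = Cmod (y N) / r ^ N * r ^ N)%R by (field; apply Rgt_not_eq, pow_lt; lra).
      pose proof (Rmax_r K 0). nra.
    + eapply Rle_trans. apply H. lia. apply Rmult_le_compat_r. lra.
      pose proof (Rmax_l K 0). lra.
Qed.

Lemma Yf_bound a q z b : (0 < q < 1)%R ->
  exists N K, forall n, (N <= n)%nat -> (Cmod (Yf a q z (Bn b q n)) <= K * q ^ n)%R.
Proof.
  intros Hq.
  set (c := 1 - z).
  destruct (pow_small q (/ (2 * (Cmod c * Cmod b + 1)))%R Hq) as [N HN].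
  apply Rinv_0_lt_compat. pose proof (Cmod_ge_0 c). pose proof (Cmod_ge_0 b).
  assert (0 <= Cmod c * Cmod b)%R by (apply Rmult_le_pos; auto). lra.
  exists N, (4 * Cmod z * (Cmod a * Cmod b + Cmod b * Cmod b))%R.
  intros n Hn. specialize (HN n Hn).
  assert (Hqn : (0 < q ^ n)%R) by (apply pow_lt; lra).
  assert (Hqn1 : (q ^ n <= 1)%R) by (apply pow_le1; lra).
  pose proof (Cmod_ge_0 c) as Hc. pose proof (Cmod_ge_0 b) as Hb0. pose proof (Cmod_ge_0 a) as Ha0.
  pose proof (Cmod_ge_0 z) as Hz0.
  assert (Hcb : (0 <= Cmod c * Cmod b)%R) by (apply Rmult_le_pos; auto).
  assert (Hsm : (Cmod c * Cmod b * q ^ n <= 1/2)%R).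
  { apply Rmult_lt_compat_r with (r := (2 * (Cmod c * Cmod b + 1))%R) in HN; [|lra].
    rewrite Rinv_l in HN by lra.
    assert (q ^ n * (2 * (Cmod c * Cmod b + 1)) = 2 * (Cmod c * Cmod b * q ^ n) + 2 * q ^ n)%R by ring. lra. }
  assert (HB : Cmod (Bn b q n) = (Cmod b * q ^ n)%R) by (unfold Bn; rewrite Cmod_mult, Cmod_R, Rabs_pos_eq; lra).
  assert (D1 : (1/2 <= Cmod (1 - c * Bn b q n))%R).
  { eapply Rle_trans. 2: apply Cmod_1_minus. rewrite Cmod_mult, HB. nra. }
  assert (D2 : (1/2 <= Cmod (1 - c * (Bn b q n * RtoC q)))%R).
  { eapply Rle_trans. 2: apply Cmod_1_minus. rewrite !Cmod_mult, HB, Cmod_R, Rabs_pos_eq by lra.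
    assert (Cmod c * (Cmod b * q ^ n * q) <= Cmod c * Cmod b * q ^ n)%R.
    { assert (0 <= Cmod c * Cmod b * q ^ n)%R by nra. nra. }
    lra. }
  assert (Hd : (1 - c * Bn b q n) * (1 - c * (Bn b q n * RtoC q)) <> 0).
  { apply Cmult_neq_0; intros E; [rewrite E, Cmod_0 in D1 | rewrite E, Cmod_0 in D2]; lra. }
  unfold Yf. fold c. rewrite Cmod_div by auto. rewrite !Cmod_mult.
  assert (Nm : (Cmod (a * Bn b q n - RtoC q * Bn b q n * Bn b q n) <= (Cmod a * Cmod b + Cmod b * Cmod b) * q ^ n)%R).
  { unfold Cminus. eapply Rle_trans. apply Cmod_triangle. rewrite Cmod_opp, !Cmod_mult, HB, Cmod_R, Rabs_pos_eq by lra.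
    assert (q * (Cmod b * q ^ n) * (Cmod b * q ^ n) <= Cmod b * Cmod b * q ^ n)%R.
    { replace (q * (Cmod b * q ^ n) * (Cmod b * q ^ n))%R with ((Cmod b * Cmod b * q ^ n) * (q * q ^ n))%R by ring.
      assert (0 <= Cmod b * Cmod b * q ^ n)%R by (apply Rmult_le_pos; nra).
      assert (q * q ^ n <= 1)%R by nra. nra. }
    nra. }
  set (m1 := Cmod (1 - c * Bn b q n)) in *. set (m2 := Cmod (1 - c * (Bn b q n * RtoC q))) in *.
  assert (I1 : (/ (m1 * m2) <= 4)%R).
  { replace 4%R with (/ ((1/2) * (1/2)))%R by field. apply Rinv_le_contravar.
    apply Rmult_lt_0_compat; lra. apply Rmult_le_compat; lra. }
  unfold Rdiv.
  set (NN := Cmod (a * Bn b q n - RtoC q * Bn b q n * Bn b q n)) in *.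
  assert (0 <= NN)%R by apply Cmod_ge_0.
  assert (0 <= / (m1 * m2))%R by (apply Rlt_le, Rinv_0_lt_compat, Rmult_lt_0_compat; lra).
  assert (Cmod z * NN <= Cmod z * ((Cmod a * Cmod b + Cmod b * Cmod b) * q ^ n))%R by (apply Rmult_le_compat_l; auto).
  assert (Cmod z * NN * / (m1 * m2) <= Cmod z * ((Cmod a * Cmod b + Cmod b * Cmod b) * q ^ n) * 4)%R.
  { apply Rmult_le_compat; auto. apply Rmult_le_pos; auto. }
  lra.
Qed.

Lemma Qc_all c b q : (0 < q < 1)%R -> qpoch_inf (c * b) q <> 0 -> forall n, qpoch_inf (c * Bn b q n) q <> 0.
Proof.
  intros Hq H n. induction n.
  - rewrite Bn_0. auto.
  - rewrite Bn_S. pose proof (qpoch_inf_shift (c * Bn b q n) q ltac:(lra)) as E.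
    replace (c * Bn b q n * RtoC q) with (c * (Bn b q n * RtoC q)) in E by ring.
    intros Z. apply IHn. rewrite E, Z. ring.
Qed.

Theorem mainTheorem13 (q : R) (alpha gamma z w : C) :
  (0 < q < 1)%R ->
  w * w = z ->
  (forall k : nat, (1 <= k)%nat ->
     qpoch_inf (qpow q (gamma - alpha + INR k + 1)) (q ^ 2) <> 0) ->
  (forall k : nat, (1 <= k)%nat ->
     1 - (1 - z) * qpow q (gamma + INR k - 1) <> 0) ->
  (forall j : nat, qpow q (gamma + INR j) <> 1) ->
  qpoch_inf ((1 - z) * qpow q gamma) q <> 0 ->
  frakF (fun k : nat =>
           qpow q ((alpha + gamma + INR k) / 2 - RtoC (3 / 4))
           * qpoch_inf (qpow q (gamma - alpha + INR k)) (q ^ 2) * w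
           / (qpoch_inf (qpow q (gamma - alpha + INR k + 1)) (q ^ 2)
              * (1 - (1 - z) * qpow q (gamma + INR k - 1))))
  = qpoch_inf (qpow q gamma) q / qpoch_inf ((1 - z) * qpow q gamma) q
    * phi11 (qpow q alpha) (qpow q gamma) q (- qpow q gamma * z).
Proof.
  intros Hq Hw HM HD Hg HP.
  change (frakF (xs q alpha gamma z w) = qpoch_inf (qpow q gamma) q / qpoch_inf ((1 - z) * qpow q gamma) q
    * phi11 (qpow q alpha) (qpow q gamma) q (- qpow q gamma * z)).
  set (a := qpow q alpha). set (b := qpow q gamma).
  assert (Hq0 : (0 < q)%R) by lra.
  assert (Hx : forall n, xs q alpha gamma z w (S n) * xs q alpha gamma z w (S n + 1)%nat = Yf a q z (Bn b q n)).
  { intros n. apply xprod; auto. apply HM; lia. apply HM; lia. apply HD; lia. apply HD; lia. }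
  destruct (Yf_bound a q z b Hq) as [N [K HK]].
  destruct (glob_bound (fun k => xs q alpha gamma z w k * xs q alpha gamma z w (k + 1)%nat) q (S N) (K / q)%R Hq0)
    as [C0 [HC0 HY]].
  { intros k Hk. destruct k as [|n]. lia. rewrite Hx. eapply Rle_trans. apply HK. lia.
    right. simpl. field. lra. }
  set (psi := fun k : nat => Rf a (Bn b q (k - 1)) q z).
  assert (HQc := Qc_all (1 - z) b q Hq HP).
  rewrite (frakF_unique (xs q alpha gamma z w) C0 q psi ltac:(lra) HC0 HY).
  - unfold psi. simpl (1 - 1)%nat. rewrite Bn_0. reflexivity.
  - intros j Hj. destruct j as [|n]. lia. unfold psi.
    replace (S n - 1)%nat with n by lia. replace (S (S n) - 1)%nat with (S n) by lia.
    replace (S n + 2 - 1)%nat with (S (S n)) by lia.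
    replace (S n + 1)%nat with (S n + 1)%nat by lia.
    rewrite Hx, !Bn_S. apply Rf_rec; auto.
    intros j. intros E. apply (Hg (n + j)%nat). rewrite qpow_gn by auto. fold b.
    rewrite pow_add, RtoC_mult.
    replace (b * (RtoC (q ^ n) * RtoC (q ^ j))) with (Bn b q n * RtoC (q ^ j)) by (unfold Bn; ring).
    replace (Bn b q n * RtoC (q ^ j)) with (1 - (1 - Bn b q n * RtoC (q ^ j))) by ring. rewrite E. ring.
  - apply Ccv_S_inv. unfold psi.
    apply (Ccv_ext (fun n => qpoch_inf (b * RtoC (q ^ n)) q * / qpoch_inf ((1 - z) * b * RtoC (q ^ n)) q
                             * phiB a (b * RtoC (q ^ n)) q z)).
    { intros n. replace (S n - 1)%nat with n by lia. unfold Rf, Bn. unfold Cdiv.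
      replace ((1 - z) * b * RtoC (q ^ n)) with ((1 - z) * (b * RtoC (q ^ n))) by ring. reflexivity. }
    replace (RtoC 1) with (1 * / 1 * 1) by field.
    apply Ccv_mult. apply Ccv_mult. apply Q_to_1; auto.
    apply Ccv_inv. apply Q_to_1; auto. intros E. apply (f_equal fst) in E. simpl in E. lra.
    apply phi_to_1; auto.
Qed.
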